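(* Let $G>I$ be a finite group with $Z(G)=I$ and let $\sigma_1,\sigma_2\in G$ with $G=\langle\sigma_1,\sigma_2\rangle$, $o(\sigma_1\sigma_2)=2$ and $[\sigma_1]=[\sigma_2]=:C$ (i.e. $\sigma_1,\sigma_2$ conjugate). Put $e_1=[\sigma_1,\sigma_1,\sigma_2,\sigma_1\sigma_2\sigma_1^{-1}]$, $e_2=[\sigma_1,\sigma_2\sigma_1\sigma_2^{-1},\sigma_2,\sigma_2]$, $e_3=[\sigma_1,\sigma_2,\sigma_1,\sigma_2]$, $e_4=[\sigma_1,\sigma_2,\sigma_2^{-1}\sigma_1\sigma_2,\sigma_1\sigma_2\sigma_1^{-1}]$, $e_5=[\sigma_1,\sigma_2,\sigma_2,\sigma_2^{-1}\sigma_1\sigma_2]$, $e_6=[\sigma_1,\sigma_2,\sigma_1\sigma_2\sigma_1^{-1},\sigma_1]$, all in $\Sigma^i(C,C,C,C)$. Then $Z^{sy}=\{e_1,\dots,e_6\}$ is an orbit of length $6$ under the group $B_4^{sy}$ of permutations of $\Sigma^i(C,C,C,C)$ generated by $\beta_{12},\beta_{13},\beta_{14},\beta_3,\eta_{23},\eta_{234}$, and, identifying $e_i$ with $i$, $\rho_4(\beta_{12})=(1)(2)(3,4)(5,6)$, $\rho_4(\beta_{13})=(1,2)(3)(4)(5,6)$, $\rho_4(\beta_{14})=(1,2)(3,4)(5)(6)$, $\rho_4(\beta_3)=(1,3,2,4)(5)(6)$, $\rho_4(\eta_{23})=(1,4)(2,3)(5,6)$, $\rho_4(\eta_{234})=(1,6,4)(2,5,3)$;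 moreover $\rho_4(B_4)\cong C_2\times C_2<A_6$ and $\rho_4(B_4^{sy})\cong\rho_4(T)\cong S_4<S_6$ for $T=\langle\beta_3,\eta_{23},\eta_{234}\rangle$, and $g_{Z^{sy}}=0$.
   Context: $\iota$ is the identity, $I$ the trivial group. $\Sigma^i(C_1,\dots,C_4)$ is the set of $G$-conjugacy classes $[\sigma_1,\dots,\sigma_4]$ (simultaneous conjugation) of tuples with $\sigma_j\in C_j$, $\langle\sigma_1,\dots,\sigma_4\rangle=G$, $\sigma_1\sigma_2\sigma_3\sigma_4=\iota$. Braids act from the right: $[\underline{\sigma}]^{\beta_2}=[\sigma_1\sigma_2\sigma_1^{-1},\sigma_1,\sigma_3,\sigma_4]$, $[\underline{\sigma}]^{\beta_3}=[\sigma_1,\sigma_2\sigma_3\sigma_2^{-1},\sigma_2,\sigma_4]$, $[\underline{\sigma}]^{\beta_4}=[\sigma_1,\sigma_2,\sigma_3\sigma_4\sigma_3^{-1},\sigma_3]$; $\beta_{12}=\beta_2^2$, $\beta_{13}=\beta_2^{-1}\beta_3^2\beta_2$, $\beta_{14}=\beta_2^{-1}\beta_3^{-1}\beta_4^2\beta_3\beta_2$; $B_4$ is the pure braid group generated by $\beta_{12},\beta_{13},\beta_{14},\beta_{23}=\beta_3^2,\beta_{24}=\beta_3^{-1}\beta_4^2\beta_3,\beta_{34}=\beta_4^2$. The topological automorphisms act on $\Sigma^i(C,C,C,C)$ by $[\underline{\sigma}]^{\eta_{23}}=[\sigma_2^{-1}\sigma_1\sigma_2,\sigma_3,\sigma_4\sigma_2\sigma_4^{-1},\sigma_4]$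 and $[\underline{\sigma}]^{\eta_{234}}=[\sigma_1,\sigma_2\sigma_3\sigma_2^{-1},\sigma_2\sigma_4\sigma_2^{-1},\sigma_2]$. $\rho_4$ denotes the induced permutation representation on $Z^{sy}$. The genus of an orbit $Z^{sy}$ (for the symmetry group $\langle(2,3),(2,3,4)\rangle$) is $g_{Z^{sy}}=1-|Z^{sy}|+\frac12(3|Z^{sy}|-z_3-z_{23}-z_{234})$, where $z_3,z_{23},z_{234}$ are the numbers of cycles (fixed points included) of $\rho_4(\beta_3),\rho_4(\eta_{23}),\rho_4(\eta_{234})$ on $Z^{sy}$. *)

(* Defs.v *)
From HB Require Import structures.
From mathcomp Require Import all_boot all_order all_algebra all_fingroup all_solvable.
Set Implicit Arguments. Unset Strict Implicit. Unset Printing Implicit Defensive.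
Import GRing.Theory.
Local Open Scope group_scope.

Section Braids.
Variable gT : finGroupType.

Definition T4 := (gT * gT * gT * gT)%type.

Definition conj4 (s : T4) (g : gT) : T4 :=
  let: (a, b, c, d) := s in (a ^ g, b ^ g, c ^ g, d ^ g).

(* the G-class [s1,s2,s3,s4] of a tuple under simultaneous conjugation *)
Definition cls (G : {set gT}) (s : T4) : {set T4} := [set conj4 s g | g in G].

Definition Sigma (G C : {set gT}) : {set {set T4}} :=
  [set cls G s | s in [set s : T4 |
     let: (a, b, c, d) := s in
     [&& a \in C, b \in C, c \in C, d \in C,
         <<[set a; b; c; d]>> == G & a * b * c * d == 1]]].

Definition b2 (s : T4) : T4 := let: (a, b, c, d) := s in (a * b * a^-1, a, c, d).
Definition b3 (s : T4) : T4 := let: (a, b, c, d) := s in (a, b * c * b^-1, b, d).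
Definition b4 (s : T4) : T4 := let: (a, b, c, d) := s in (a, b, c * d * c^-1, c).
Definition h23 (s : T4) : T4 :=
  let: (a, b, c, d) := s in (b^-1 * a * b, c, d * b * d^-1, d).
Definition h234 (s : T4) : T4 :=
  let: (a, b, c, d) := s in (a, b * c * b^-1, b * d * b^-1, b).

Definition b2i (s : T4) : T4 := let: (x, y, c, d) := s in (y, y^-1 * x * y, c, d).
Definition b3i (s : T4) : T4 := let: (a, x, y, d) := s in (a, y, y^-1 * x * y, d).
Definition b4i (s : T4) : T4 := let: (a, b, x, y) := s in (a, b, y, y^-1 * x * y).
Definition h23i (s : T4) : T4 :=
  let: (x, y, z, w) := s in
  ((w^-1 * z * w) * x * (w^-1 * z * w)^-1, w^-1 * z * w, y, w).
Definition h234i (s : T4) : T4 :=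
  let: (a, y, z, w) := s in (a, w, w^-1 * y * w, w^-1 * z * w).

Lemma b2K : cancel b2 b2i.
Proof. by case=> [[[a b] c] d] /=; rewrite !mulgA mulVg mul1g mulgKV. Qed.
Lemma b3K : cancel b3 b3i.
Proof. by case=> [[[a b] c] d] /=; rewrite !mulgA mulVg mul1g mulgKV. Qed.
Lemma b4K : cancel b4 b4i.
Proof. by case=> [[[a b] c] d] /=; rewrite !mulgA mulVg mul1g mulgKV. Qed.
Lemma h23K : cancel h23 h23i.
Proof.
case=> [[[a b] c] d] /=.
have E : d^-1 * (d * b * d^-1) * d = b by rewrite !mulgA mulVg mul1g mulgKV.
by rewrite E !mulgA mulgV mul1g mulgK.
Qed.
Lemma h234K : cancel h234 h234i.
Proof. by case=> [[[a b] c] d] /=; rewrite !mulgA !mulVg !mul1g !mulgKV. Qed.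

(* induced permutations of the set of classes (acting on all of {set T4};
   Sigma is a union of such classes and is stable) *)
Definition bperm (f : T4 -> T4) (fi : injective f) : {perm {set T4}} :=
  perm (imset_inj fi).

Definition P2 := bperm (can_inj b2K).
Definition P3 := bperm (can_inj b3K).
Definition P4 := bperm (can_inj b4K).
Definition eta23 := bperm (can_inj h23K).
Definition eta234 := bperm (can_inj h234K).

(* braids act from the right; in {perm _}, (p * q) x = q (p x) *)
Definition beta12 := P2 * P2.
Definition beta13 := P2^-1 * (P3 * P3) * P2.
Definition beta14 := P2^-1 * P3^-1 * (P4 * P4) * P3 * P2.
Definition beta23 := P3 * P3.
Definition beta24 := P3^-1 * (P4 * P4) * P3.
Definition beta34 := P4 * P4.

Definition B4 : {group {perm {set T4}}} :=
  <<[set beta12; beta13; beta14; beta23; beta24; beta34]>>%G.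
Definition B4sy : {group {perm {set T4}}} :=
  <<[set beta12; beta13; beta14; P3; eta23; eta234]>>%G.
Definition Tgrp : {group {perm {set T4}}} := <<[set P3; eta23; eta234]>>%G.

(* rho_4 restricted to the invariant set Z: the permutation representation
   rho_4(H) is (restr_perm Z) @* H *)
Definition ncycles (Z : {set {set T4}}) (p : {perm {set T4}}) : nat :=
  #|[set porbit p x | x in Z]|.

End Braids.

Definition genus (nZ z3 z23 z234 : nat) : rat :=
  (1 - nZ%:R + (3 * nZ%:R - z3%:R - z23%:R - z234%:R) / 2)%R.

(* Main.v *)
Require Import Defs.
From HB Require Import structures.
From mathcomp Require Import all_boot all_order all_algebra all_fingroup all_solvable.
Set Implicit Arguments. Unset Strict Implicit. Unset Printing Implicit Defensive.
Local Open Scope group_scope.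

Section Generic.
Variables (gT : finGroupType) (G : {group gT}).

Definition conjc (f : T4 gT -> T4 gT) := forall s g, f (conj4 s g) = conj4 (f s) g.

Lemma bperm_cls f (fc : conjc f) (fi : injective f) s :
  bperm fi (cls G s) = cls G (f s).
Proof.
rewrite /bperm permE /cls -imset_comp; apply: eq_imset => g /=; exact: fc.
Qed.

Lemma bpermV_cls f g (fc : conjc f) (fg : cancel g f) (fi : injective f) s :
  (bperm fi)^-1 (cls G s) = cls G (g s).
Proof. by rewrite -{1}[s]fg -(bperm_cls fc fi) permK. Qed.

Lemma conj4M (s : T4 gT) (h g : gT) : conj4 (conj4 s h) g = conj4 s (h * g).
Proof. by case: s => [[[x y] z] w] /=; rewrite !conjgM. Qed.

Lemma cls_conj (s : T4 gT) (h : gT) : h \in G -> cls G (conj4 s h) = cls G s.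
Proof.
move=> hG; apply/setP => x; apply/imsetP/imsetP => [[g Gg ->]|[g Gg ->]].
  by exists (h * g); rewrite ?groupM // conj4M.
by exists (h^-1 * g); rewrite ?groupM ?groupV // conj4M mulKVg.
Qed.

Lemma cls_eq (s s' : T4 gT) (h : gT) : h \in G -> s = conj4 s' h -> cls G s = cls G s'.
Proof. by move=> hG ->; rewrite cls_conj. Qed.

Lemma b2c : conjc (@b2 gT).
Proof. by move=> [[[x y] z] w] g /=; rewrite !conjMg conjVg. Qed.
Lemma b3c : conjc (@b3 gT).
Proof. by move=> [[[x y] z] w] g /=; rewrite !conjMg conjVg. Qed.
Lemma b4c : conjc (@b4 gT).
Proof. by move=> [[[x y] z] w] g /=; rewrite !conjMg conjVg. Qed.
Lemma h23c : conjc (@h23 gT).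
Proof. by move=> [[[x y] z] w] g /=; rewrite !conjMg !conjVg. Qed.
Lemma h234c : conjc (@h234 gT).
Proof. by move=> [[[x y] z] w] g /=; rewrite !conjMg !conjVg. Qed.
Lemma b2iK : cancel (@b2i gT) (@b2 gT).
Proof. by case=> [[[x y] c] d] /=; rewrite !mulgA mulgK mulgV mul1g. Qed.
Lemma b3iK : cancel (@b3i gT) (@b3 gT).
Proof. by case=> [[[x y] c] d] /=; rewrite !mulgA mulgK mulgV mul1g. Qed.

End Generic.

Section Words.
Variables (gT : finGroupType) (G : {group gT}) (a t : gT).
Hypotheses (aG : a \in G) (tG : t \in G) (tt1 : t * t = 1).

Lemma tV : t^-1 = t. Proof. by rewrite -[t^-1]mul1g -tt1 mulgK. Qed.
Lemma ttK x : t * (t * x) = x. Proof. by rewrite mulgA tt1 mul1g. Qed.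

Ltac gsimp := rewrite /conj4 /conjg ?invMg ?invgK ?invg1 ?tV -?mulgA;
  repeat progress rewrite ?mulKg ?mulKVg ?mulgV ?mulVg ?mulg1 ?mul1g ?ttK ?tt1.
Ltac gmem := rewrite ?groupM ?groupV ?aG ?tG ?group1.

Local Notation s2 := (a^-1 * t).
Definition tup1 : T4 gT := (a, a, s2, a * s2 * a^-1).
Definition tup2 : T4 gT := (a, s2 * a * s2^-1, s2, s2).
Definition tup3 : T4 gT := (a, s2, a, s2).
Definition tup4 : T4 gT := (a, s2, s2^-1 * a * s2, a * s2 * a^-1).
Definition tup5 : T4 gT := (a, s2, s2, s2^-1 * a * s2).
Definition tup6 : T4 gT := (a, s2, a * s2 * a^-1, a).
Definition E1 := cls G tup1.
Definition E2 := cls G tup2.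
Definition E3 := cls G tup3.
Definition E4 := cls G tup4.
Definition E5 := cls G tup5.
Definition E6 := cls G tup6.
Lemma P3_1 : P3 gT (E1) = E3.
Proof using aG tG tt1. rewrite /E1 /E3 /tup1 /tup3; rewrite /P3 (bperm_cls G (@b3c gT)); apply: (cls_eq (h := (a^-1))); first by gmem. by rewrite /=; gsimp. Qed.
Lemma P3_2 : P3 gT (E2) = E4.
Proof using aG tG tt1. rewrite /E2 /E4 /tup2 /tup4; rewrite /P3 (bperm_cls G (@b3c gT)); apply: (cls_eq (h := (a))); first by gmem. by rewrite /=; gsimp. Qed.
Lemma P3_3 : P3 gT (E3) = E2.
Proof using aG tG tt1. rewrite /E3 /E2 /tup3 /tup2; rewrite /P3 (bperm_cls G (@b3c gT)); apply: (cls_eq (h := 1)); first by gmem. by rewrite /=; gsimp. Qed.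
Lemma P3_4 : P3 gT (E4) = E1.
Proof using aG tG tt1. rewrite /E4 /E1 /tup4 /tup1; rewrite /P3 (bperm_cls G (@b3c gT)); apply: (cls_eq (h := 1)); first by gmem. by rewrite /=; gsimp. Qed.
Lemma P3_5 : P3 gT (E5) = E5.
Proof using aG tG tt1. rewrite /E5 /E5 /tup5 /tup5; rewrite /P3 (bperm_cls G (@b3c gT)); apply: (cls_eq (h := 1)); first by gmem. by rewrite /=; gsimp. Qed.
Lemma P3_6 : P3 gT (E6) = E6.
Proof using aG tG tt1. rewrite /E6 /E6 /tup6 /tup6; rewrite /P3 (bperm_cls G (@b3c gT)); apply: (cls_eq (h := (a))); first by gmem. by rewrite /=; gsimp. Qed.
Lemma eta23_1 : eta23 gT (E1) = E4.
Proof using aG tG tt1. rewrite /E1 /E4 /tup1 /tup4; rewrite /eta23 (bperm_cls G (@h23c gT)); apply: (cls_eq (h := 1)); first by gmem. by rewrite /=; gsimp. Qed.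
Lemma eta23_2 : eta23 gT (E2) = E3.
Proof using aG tG tt1. rewrite /E2 /E3 /tup2 /tup3; rewrite /eta23 (bperm_cls G (@h23c gT)); apply: (cls_eq (h := (t * a * t * a))); first by gmem. by rewrite /=; gsimp. Qed.
Lemma eta23_3 : eta23 gT (E3) = E2.
Proof using aG tG tt1. rewrite /E3 /E2 /tup3 /tup2; rewrite /eta23 (bperm_cls G (@h23c gT)); apply: (cls_eq (h := (a^-1 * t))); first by gmem. by rewrite /=; gsimp. Qed.
Lemma eta23_4 : eta23 gT (E4) = E1.
Proof using aG tG tt1. rewrite /E4 /E1 /tup4 /tup1; rewrite /eta23 (bperm_cls G (@h23c gT)); apply: (cls_eq (h := (a * t))); first by gmem. by rewrite /=; gsimp. Qed.
Lemma eta23_5 : eta23 gT (E5) = E6.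
Proof using aG tG tt1. rewrite /E5 /E6 /tup5 /tup6; rewrite /eta23 (bperm_cls G (@h23c gT)); apply: (cls_eq (h := (a^-1 * t))); first by gmem. by rewrite /=; gsimp. Qed.
Lemma eta23_6 : eta23 gT (E6) = E5.
Proof using aG tG tt1. rewrite /E6 /E5 /tup6 /tup5; rewrite /eta23 (bperm_cls G (@h23c gT)); apply: (cls_eq (h := (t))); first by gmem. by rewrite /=; gsimp. Qed.
Lemma eta234_1 : eta234 gT (E1) = E6.
Proof using aG tG tt1. rewrite /E1 /E6 /tup1 /tup6; rewrite /eta234 (bperm_cls G (@h234c gT)); apply: (cls_eq (h := (a^-1))); first by gmem. by rewrite /=; gsimp. Qed.
Lemma eta234_2 : eta234 gT (E2) = E5.
Proof using aG tG tt1. rewrite /E2 /E5 /tup2 /tup5; rewrite /eta234 (bperm_cls G (@h234c gT)); apply: (cls_eq (h := (a))); first by gmem. by rewrite /=; gsimp. Qed.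
Lemma eta234_3 : eta234 gT (E3) = E2.
Proof using aG tG tt1. rewrite /E3 /E2 /tup3 /tup2; rewrite /eta234 (bperm_cls G (@h234c gT)); apply: (cls_eq (h := 1)); first by gmem. by rewrite /=; gsimp. Qed.
Lemma eta234_4 : eta234 gT (E4) = E1.
Proof using aG tG tt1. rewrite /E4 /E1 /tup4 /tup1; rewrite /eta234 (bperm_cls G (@h234c gT)); apply: (cls_eq (h := (a))); first by gmem. by rewrite /=; gsimp. Qed.
Lemma eta234_5 : eta234 gT (E5) = E3.
Proof using aG tG tt1. rewrite /E5 /E3 /tup5 /tup3; rewrite /eta234 (bperm_cls G (@h234c gT)); apply: (cls_eq (h := 1)); first by gmem. by rewrite /=; gsimp. Qed.
Lemma eta234_6 : eta234 gT (E6) = E4.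
Proof using aG tG tt1. rewrite /E6 /E4 /tup6 /tup4; rewrite /eta234 (bperm_cls G (@h234c gT)); apply: (cls_eq (h := (a))); first by gmem. by rewrite /=; gsimp. Qed.
Lemma P4_1 : P4 gT (E1) = E1.
Proof using aG tG tt1. rewrite /E1 /E1 /tup1 /tup1; rewrite /P4 (bperm_cls G (@b4c gT)); apply: (cls_eq (h := (a))); first by gmem. by rewrite /=; gsimp. Qed.
Lemma P4_2 : P4 gT (E2) = E2.
Proof using aG tG tt1. rewrite /E2 /E2 /tup2 /tup2; rewrite /P4 (bperm_cls G (@b4c gT)); apply: (cls_eq (h := 1)); first by gmem. by rewrite /=; gsimp. Qed.
Lemma P4_3 : P4 gT (E3) = E6.
Proof using aG tG tt1. rewrite /E3 /E6 /tup3 /tup6; rewrite /P4 (bperm_cls G (@b4c gT)); apply: (cls_eq (h := 1)); first by gmem. by rewrite /=; gsimp. Qed.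
Lemma P4_4 : P4 gT (E4) = E5.
Proof using aG tG tt1. rewrite /E4 /E5 /tup4 /tup5; rewrite /P4 (bperm_cls G (@b4c gT)); apply: (cls_eq (h := 1)); first by gmem. by rewrite /=; gsimp. Qed.
Lemma P4_5 : P4 gT (E5) = E3.
Proof using aG tG tt1. rewrite /E5 /E3 /tup5 /tup3; rewrite /P4 (bperm_cls G (@b4c gT)); apply: (cls_eq (h := 1)); first by gmem. by rewrite /=; gsimp. Qed.
Lemma P4_6 : P4 gT (E6) = E4.
Proof using aG tG tt1. rewrite /E6 /E4 /tup6 /tup4; rewrite /P4 (bperm_cls G (@b4c gT)); apply: (cls_eq (h := 1)); first by gmem. by rewrite /=; gsimp. Qed.
Lemma beta12_1 : beta12 gT (E1) = E1.
Proof using aG tG tt1. rewrite /E1 /E1 /tup1 /tup1; rewrite /beta12 /P2 permM !(bperm_cls G (@b2c gT)); apply: (cls_eq (h := 1)); first by gmem. by rewrite /=; gsimp. Qed.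
Lemma beta12_2 : beta12 gT (E2) = E2.
Proof using aG tG tt1. rewrite /E2 /E2 /tup2 /tup2; rewrite /beta12 /P2 permM !(bperm_cls G (@b2c gT)); apply: (cls_eq (h := (a^-1 * t * a^-1 * t))); first by gmem. by rewrite /=; gsimp. Qed.
Lemma beta12_3 : beta12 gT (E3) = E4.
Proof using aG tG tt1. rewrite /E3 /E4 /tup3 /tup4; rewrite /beta12 /P2 permM !(bperm_cls G (@b2c gT)); apply: (cls_eq (h := (t))); first by gmem. by rewrite /=; gsimp. Qed.
Lemma beta12_4 : beta12 gT (E4) = E3.
Proof using aG tG tt1. rewrite /E4 /E3 /tup4 /tup3; rewrite /beta12 /P2 permM !(bperm_cls G (@b2c gT)); apply: (cls_eq (h := (t))); first by gmem. by rewrite /=; gsimp. Qed.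
Lemma beta12_5 : beta12 gT (E5) = E6.
Proof using aG tG tt1. rewrite /E5 /E6 /tup5 /tup6; rewrite /beta12 /P2 permM !(bperm_cls G (@b2c gT)); apply: (cls_eq (h := (t))); first by gmem. by rewrite /=; gsimp. Qed.
Lemma beta12_6 : beta12 gT (E6) = E5.
Proof using aG tG tt1. rewrite /E6 /E5 /tup6 /tup5; rewrite /beta12 /P2 permM !(bperm_cls G (@b2c gT)); apply: (cls_eq (h := (t))); first by gmem. by rewrite /=; gsimp. Qed.
Lemma beta13_1 : beta13 gT (E1) = E2.
Proof using aG tG tt1. rewrite /E1 /E2 /tup1 /tup2; rewrite /beta13 /P2 /P3 !permM (bpermV_cls G (@b2c gT) (@b2iK gT)) !(bperm_cls G (@b3c gT)) (bperm_cls G (@b2c gT)); apply: (cls_eq (h := (a^-1 * t * a^-1))); first by gmem. by rewrite /=; gsimp. Qed.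
Lemma beta13_2 : beta13 gT (E2) = E1.
Proof using aG tG tt1. rewrite /E2 /E1 /tup2 /tup1; rewrite /beta13 /P2 /P3 !permM (bpermV_cls G (@b2c gT) (@b2iK gT)) !(bperm_cls G (@b3c gT)) (bperm_cls G (@b2c gT)); apply: (cls_eq (h := (a * t * a))); first by gmem. by rewrite /=; gsimp. Qed.
Lemma beta13_3 : beta13 gT (E3) = E3.
Proof using aG tG tt1. rewrite /E3 /E3 /tup3 /tup3; rewrite /beta13 /P2 /P3 !permM (bpermV_cls G (@b2c gT) (@b2iK gT)) !(bperm_cls G (@b3c gT)) (bperm_cls G (@b2c gT)); apply: (cls_eq (h := (a^-1 * t * a^-1 * t))); first by gmem. by rewrite /=; gsimp. Qed.
Lemma beta13_4 : beta13 gT (E4) = E4.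
Proof using aG tG tt1. rewrite /E4 /E4 /tup4 /tup4; rewrite /beta13 /P2 /P3 !permM (bpermV_cls G (@b2c gT) (@b2iK gT)) !(bperm_cls G (@b3c gT)) (bperm_cls G (@b2c gT)); apply: (cls_eq (h := 1)); first by gmem. by rewrite /=; gsimp. Qed.
Lemma beta13_5 : beta13 gT (E5) = E6.
Proof using aG tG tt1. rewrite /E5 /E6 /tup5 /tup6; rewrite /beta13 /P2 /P3 !permM (bpermV_cls G (@b2c gT) (@b2iK gT)) !(bperm_cls G (@b3c gT)) (bperm_cls G (@b2c gT)); apply: (cls_eq (h := (a^-1 * t))); first by gmem. by rewrite /=; gsimp. Qed.
Lemma beta13_6 : beta13 gT (E6) = E5.
Proof using aG tG tt1. rewrite /E6 /E5 /tup6 /tup5; rewrite /beta13 /P2 /P3 !permM (bpermV_cls G (@b2c gT) (@b2iK gT)) !(bperm_cls G (@b3c gT)) (bperm_cls G (@b2c gT)); apply: (cls_eq (h := (t * a))); first by gmem. by rewrite /=; gsimp. Qed.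
Lemma beta14_1 : beta14 gT (E1) = E2.
Proof using aG tG tt1. rewrite /E1 /E2 /tup1 /tup2; rewrite /beta14 /P2 /P3 /P4 !permM (bpermV_cls G (@b2c gT) (@b2iK gT)) (bpermV_cls G (@b3c gT) (@b3iK gT)) !(bperm_cls G (@b4c gT)) (bperm_cls G (@b3c gT)) (bperm_cls G (@b2c gT)); apply: (cls_eq (h := (a^-1 * t))); first by gmem. by rewrite /=; gsimp. Qed.
Lemma beta14_2 : beta14 gT (E2) = E1.
Proof using aG tG tt1. rewrite /E2 /E1 /tup2 /tup1; rewrite /beta14 /P2 /P3 /P4 !permM (bpermV_cls G (@b2c gT) (@b2iK gT)) (bpermV_cls G (@b3c gT) (@b3iK gT)) !(bperm_cls G (@b4c gT)) (bperm_cls G (@b3c gT)) (bperm_cls G (@b2c gT)); apply: (cls_eq (h := (t * a))); first by gmem. by rewrite /=; gsimp. Qed.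
Lemma beta14_3 : beta14 gT (E3) = E4.
Proof using aG tG tt1. rewrite /E3 /E4 /tup3 /tup4; rewrite /beta14 /P2 /P3 /P4 !permM (bpermV_cls G (@b2c gT) (@b2iK gT)) (bpermV_cls G (@b3c gT) (@b3iK gT)) !(bperm_cls G (@b4c gT)) (bperm_cls G (@b3c gT)) (bperm_cls G (@b2c gT)); apply: (cls_eq (h := (t * a))); first by gmem. by rewrite /=; gsimp. Qed.
Lemma beta14_4 : beta14 gT (E4) = E3.
Proof using aG tG tt1. rewrite /E4 /E3 /tup4 /tup3; rewrite /beta14 /P2 /P3 /P4 !permM (bpermV_cls G (@b2c gT) (@b2iK gT)) (bpermV_cls G (@b3c gT) (@b3iK gT)) !(bperm_cls G (@b4c gT)) (bperm_cls G (@b3c gT)) (bperm_cls G (@b2c gT)); apply: (cls_eq (h := (a^-1 * t))); first by gmem. by rewrite /=; gsimp. Qed.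
Lemma beta14_5 : beta14 gT (E5) = E5.
Proof using aG tG tt1. rewrite /E5 /E5 /tup5 /tup5; rewrite /beta14 /P2 /P3 /P4 !permM (bpermV_cls G (@b2c gT) (@b2iK gT)) (bpermV_cls G (@b3c gT) (@b3iK gT)) !(bperm_cls G (@b4c gT)) (bperm_cls G (@b3c gT)) (bperm_cls G (@b2c gT)); apply: (cls_eq (h := (a^-1 * t * a^-1 * t))); first by gmem. by rewrite /=; gsimp. Qed.
Lemma beta14_6 : beta14 gT (E6) = E6.
Proof using aG tG tt1. rewrite /E6 /E6 /tup6 /tup6; rewrite /beta14 /P2 /P3 /P4 !permM (bpermV_cls G (@b2c gT) (@b2iK gT)) (bpermV_cls G (@b3c gT) (@b3iK gT)) !(bperm_cls G (@b4c gT)) (bperm_cls G (@b3c gT)) (bperm_cls G (@b2c gT)); apply: (cls_eq (h := 1)); first by gmem. by rewrite /=; gsimp. Qed.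
End Words.

Section Distinct.
Variables (gT : finGroupType) (G : {group gT}) (a t : gT).
Hypotheses (aG : a \in G) (tG : t \in G) (tt1 : t * t = 1).
Hypothesis nc : a * t != t * a.
Local Notation s2 := (a^-1 * t).

Let tV' : t^-1 = t. Proof. exact: tV tt1. Qed.

Lemma C1 : t = a * a -> False.
Proof. by move=> E; case/eqP: nc; rewrite E mulgA. Qed.
Lemma C2 : t = a^-1 * a^-1 -> False.
Proof. by move=> E; case/eqP: nc; rewrite E mulKVg mulgKV. Qed.
Lemma C3 : t * (a * t) = a -> False.
Proof. by move=> E; case/eqP: nc; rewrite -{1}E -!mulgA tt1 mulg1. Qed.
Lemma C4 : t * a^-1 = a^-1 * t -> False.
Proof.
move=> E; case/eqP: nc.
by rewrite -[a * t](mulgKV a) -(mulgA a t) E mulKVg.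
Qed.

Lemma K1 : s2 = a -> False.
Proof. by move=> E; apply: C1; rewrite -{2}E mulKVg. Qed.
Lemma K7 : a * s2 * a^-1 = a -> False.
Proof. by rewrite mulKVg => E; apply: C1; rewrite -[t](mulgKV a) E. Qed.
Lemma K4 : a * s2 * a^-1 = s2 -> False.
Proof. by rewrite mulKVg => E; apply: C4; rewrite E. Qed.
Lemma K3 : s2^-1 * a * s2 = a -> False.
Proof. by rewrite invMg invgK tV' -!mulgA mulKVg; exact: C3. Qed.
Lemma K2 : s2 * a * s2^-1 = a -> False.
Proof.
rewrite invMg invgK tV' -!mulgA => E; apply: C3; apply: (mulIg a).
by rewrite -!mulgA -[LHS](mulKVg a) E.
Qed.
Lemma K6 : s2^-1 * a * s2 = s2 -> False.
Proof.
rewrite invMg invgK tV' -!mulgA mulKVg => E; apply: C2.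
have E' : t * a = a^-1 by apply: (mulIg t); rewrite -mulgA E.
by rewrite -{1}E' mulgK.
Qed.
Lemma K5 : s2^-1 * a * s2 = a * s2 * a^-1 -> False.
Proof.
rewrite invMg invgK tV' mulKVg -!mulgA mulKVg => E; apply: C2.
have E' : a * t = a^-1 by apply: (mulgI t).
by rewrite -{2}E' mulKg.
Qed.


Hypothesis genG : <<[set a; s2]>> = G.
Hypothesis ZG : 'Z(G) = 1.

Lemma cls_mem (s s' : T4 gT) : cls G s = cls G s' -> exists2 g, g \in G & s' = conj4 s g.
Proof.
move=> E; have : s' \in cls G s.
  rewrite E; apply/imsetP; exists 1 => //.
  by case: {E} s' => [[[x y] z] w] /=; rewrite !conjg1.
by case/imsetP => g Gg ->; exists g.
Qed.

Lemma gcen g : g \in G -> a = a ^ g -> s2 = s2 ^ g -> g = 1.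
Proof.
move=> Gg ha hs; have gC : g \in 'C([set a; s2]).
  apply/centP => x; rewrite !inE => /orP[]/eqP->; apply/commute_sym/commgP/conjg_fixP; exact/esym.
move: gC; rewrite -cent_gen genG => gC.
have : g \in 'Z(G) by rewrite inE Gg gC.
by rewrite ZG inE => /eqP.
Qed.


Lemma n12 : E1 G a t != E2 G a t. Proof using aG tG tt1 nc genG ZG. by apply/eqP => /cls_mem[g Gg]; rewrite /tup1 /tup2 /tup3 /tup4 /tup5 /tup6 /= => -[= h1 h2 h3 h4]; apply: K2; rewrite h2 -h1. Qed.
Lemma n13 : E1 G a t != E3 G a t. Proof using aG tG tt1 nc genG ZG. by apply/eqP => /cls_mem[g Gg]; rewrite /tup1 /tup2 /tup3 /tup4 /tup5 /tup6 /= => -[= h1 h2 h3 h4]; apply: K1; rewrite h2 -h1. Qed.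
Lemma n14 : E1 G a t != E4 G a t. Proof using aG tG tt1 nc genG ZG. by apply/eqP => /cls_mem[g Gg]; rewrite /tup1 /tup2 /tup3 /tup4 /tup5 /tup6 /= => -[= h1 h2 h3 h4]; apply: K1; rewrite h2 -h1. Qed.
Lemma n15 : E1 G a t != E5 G a t. Proof using aG tG tt1 nc genG ZG. by apply/eqP => /cls_mem[g Gg]; rewrite /tup1 /tup2 /tup3 /tup4 /tup5 /tup6 /= => -[= h1 h2 h3 h4]; apply: K1; rewrite h2 -h1. Qed.
Lemma n16 : E1 G a t != E6 G a t. Proof using aG tG tt1 nc genG ZG. by apply/eqP => /cls_mem[g Gg]; rewrite /tup1 /tup2 /tup3 /tup4 /tup5 /tup6 /= => -[= h1 h2 h3 h4]; apply: K1; rewrite h2 -h1. Qed.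
Lemma n23 : E2 G a t != E3 G a t. Proof using aG tG tt1 nc genG ZG. by apply/eqP => /cls_mem[g Gg]; rewrite /tup1 /tup2 /tup3 /tup4 /tup5 /tup6 /= => -[= h1 h2 h3 h4]; apply: K1; rewrite h4 -h3. Qed.
Lemma n24 : E2 G a t != E4 G a t. Proof using aG tG tt1 nc genG ZG. by apply/eqP => /cls_mem[g Gg]; rewrite /tup1 /tup2 /tup3 /tup4 /tup5 /tup6 /= => -[= h1 h2 h3 h4]; apply: K5; rewrite h3 h4. Qed.
Lemma n25 : E2 G a t != E5 G a t. Proof using aG tG tt1 nc genG ZG. by apply/eqP => /cls_mem[g Gg]; rewrite /tup1 /tup2 /tup3 /tup4 /tup5 /tup6 /= => -[= h1 h2 h3 h4]; apply: K6; rewrite h4 -h3. Qed.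
Lemma n26 : E2 G a t != E6 G a t. Proof using aG tG tt1 nc genG ZG. by apply/eqP => /cls_mem[g Gg]; rewrite /tup1 /tup2 /tup3 /tup4 /tup5 /tup6 /= => -[= h1 h2 h3 h4]; apply: K7; rewrite h3 -h4. Qed.
Lemma n34 : E3 G a t != E4 G a t. Proof using aG tG tt1 nc genG ZG. by apply/eqP => /cls_mem[g Gg]; rewrite /tup1 /tup2 /tup3 /tup4 /tup5 /tup6 /= => -[= h1 h2 h3 h4]; have g1 := gcen Gg h1 h2; rewrite g1 ?conjg1 in h3 h4; apply: K3. Qed.
Lemma n35 : E3 G a t != E5 G a t. Proof using aG tG tt1 nc genG ZG. by apply/eqP => /cls_mem[g Gg]; rewrite /tup1 /tup2 /tup3 /tup4 /tup5 /tup6 /= => -[= h1 h2 h3 h4]; have g1 := gcen Gg h1 h2; rewrite g1 ?conjg1 in h3 h4; apply: K1. Qed.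
Lemma n36 : E3 G a t != E6 G a t. Proof using aG tG tt1 nc genG ZG. by apply/eqP => /cls_mem[g Gg]; rewrite /tup1 /tup2 /tup3 /tup4 /tup5 /tup6 /= => -[= h1 h2 h3 h4]; have g1 := gcen Gg h1 h2; rewrite g1 ?conjg1 in h3 h4; apply: K7. Qed.
Lemma n45 : E4 G a t != E5 G a t. Proof using aG tG tt1 nc genG ZG. by apply/eqP => /cls_mem[g Gg]; rewrite /tup1 /tup2 /tup3 /tup4 /tup5 /tup6 /= => -[= h1 h2 h3 h4]; have g1 := gcen Gg h1 h2; rewrite g1 ?conjg1 in h3 h4; apply: K6; rewrite -h3. Qed.
Lemma n46 : E4 G a t != E6 G a t. Proof using aG tG tt1 nc genG ZG. by apply/eqP => /cls_mem[g Gg]; rewrite /tup1 /tup2 /tup3 /tup4 /tup5 /tup6 /= => -[= h1 h2 h3 h4]; have g1 := gcen Gg h1 h2; rewrite g1 ?conjg1 in h3 h4; apply: K5; rewrite -h3. Qed.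
Lemma n56 : E5 G a t != E6 G a t. Proof using aG tG tt1 nc genG ZG. by apply/eqP => /cls_mem[g Gg]; rewrite /tup1 /tup2 /tup3 /tup4 /tup5 /tup6 /= => -[= h1 h2 h3 h4]; have g1 := gcen Gg h1 h2; rewrite g1 ?conjg1 in h3 h4; apply: K4. Qed.

End Distinct.

Section ZPart.
Variables (gT : finGroupType) (G : {group gT}) (a t : gT).
Hypotheses (aG : a \in G) (tG : t \in G) (tt1 : t * t = 1).
Hypothesis nc : a * t != t * a.
Local Notation s2 := (a^-1 * t).
Hypothesis genG : <<[set a; s2]>> = G.
Hypothesis ZG : 'Z(G) = 1.
Hypothesis s2C : s2 \in a ^: G.

Let tV1 := tV tt1.
Let ttK1 := ttK tt1.
Ltac gsimp := rewrite /conj4 /conjg ?invMg ?invgK ?invg1 ?tV1 -?mulgA;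
  repeat progress rewrite ?mulKg ?mulKVg ?mulgV ?mulVg ?mulg1 ?mul1g ?ttK1 ?tt1.
Let clE := (@P3_1 _ _ _ _ aG tG tt1, @P3_2 _ _ _ _ aG tG tt1, @P3_3 _ _ _ _ aG tG tt1, @P3_4 _ _ _ _ aG tG tt1, @P3_5 _ _ _ _ aG tG tt1, @P3_6 _ _ _ _ aG tG tt1, @eta23_1 _ _ _ _ aG tG tt1, @eta23_2 _ _ _ _ aG tG tt1, @eta23_3 _ _ _ _ aG tG tt1, @eta23_4 _ _ _ _ aG tG tt1, @eta23_5 _ _ _ _ aG tG tt1, @eta23_6 _ _ _ _ aG tG tt1, @eta234_1 _ _ _ _ aG tG tt1, @eta234_2 _ _ _ _ aG tG tt1, @eta234_3 _ _ _ _ aG tG tt1, @eta234_4 _ _ _ _ aG tG tt1, @eta234_5 _ _ _ _ aG tG tt1, @eta234_6 _ _ _ _ aG tG tt1, @P4_1 _ _ _ _ aG tG tt1, @P4_2 _ _ _ _ aG tG tt1, @P4_3 _ _ _ _ aG tG tt1, @P4_4 _ _ _ _ aG tG tt1, @P4_5 _ _ _ _ aG tG tt1, @P4_6 _ _ _ _ aG tG tt1, @beta12_1 _ _ _ _ aG tG tt1, @beta12_2 _ _ _ _ aG tG tt1, @beta12_3 _ _ _ _ aG tG tt1, @beta12_4 _ _ _ _ aG tG tt1, @beta12_5 _ _ _ _ aG tG tt1, @beta12_6 _ _ _ _ aG tG tt1, @beta13_1 _ _ _ _ aG tG tt1, @beta13_2 _ _ _ _ aG tG tt1, @beta13_3 _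 _ _ _ aG tG tt1, @beta13_4 _ _ _ _ aG tG tt1, @beta13_5 _ _ _ _ aG tG tt1, @beta13_6 _ _ _ _ aG tG tt1, @beta14_1 _ _ _ _ aG tG tt1, @beta14_2 _ _ _ _ aG tG tt1, @beta14_3 _ _ _ _ aG tG tt1, @beta14_4 _ _ _ _ aG tG tt1, @beta14_5 _ _ _ _ aG tG tt1, @beta14_6 _ _ _ _ aG tG tt1).
Let N12 := n12 aG tG tt1 nc genG ZG.
Let N13 := n13 aG tG tt1 nc genG ZG.
Let N14 := n14 aG tG tt1 nc genG ZG.
Let N15 := n15 aG tG tt1 nc genG ZG.
Let N16 := n16 aG tG tt1 nc genG ZG.
Let N23 := n23 aG tG tt1 nc genG ZG.
Let N24 := n24 aG tG tt1 nc genG ZG.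
Let N25 := n25 aG tG tt1 nc genG ZG.
Let N26 := n26 aG tG tt1 nc genG ZG.
Let N34 := n34 aG tG tt1 nc genG ZG.
Let N35 := n35 aG tG tt1 nc genG ZG.
Let N36 := n36 aG tG tt1 nc genG ZG.
Let N45 := n45 aG tG tt1 nc genG ZG.
Let N46 := n46 aG tG tt1 nc genG ZG.
Let N56 := n56 aG tG tt1 nc genG ZG.

Definition Zs := [set E1 G a t; E2 G a t; E3 G a t; E4 G a t; E5 G a t; E6 G a t].

Lemma Zs_ind (P : {set T4 gT} -> Prop) : P (E1 G a t) -> P (E2 G a t) -> P (E3 G a t) ->
  P (E4 G a t) -> P (E5 G a t) -> P (E6 G a t) -> forall X, X \in Zs -> P X.
Proof.
move=> h1 h2 h3 h4 h5 h6 X; rewrite !inE.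
by case/orP => [/orP[/orP[/orP[/orP[|]|]|]|]|] /eqP->.
Qed.

Lemma uniqE : uniq [:: E1 G a t; E2 G a t; E3 G a t; E4 G a t; E5 G a t; E6 G a t].
Proof. by rewrite /= !inE (negbTE N12) (negbTE N13) (negbTE N14) (negbTE N15) (negbTE N16) (negbTE N23) (negbTE N24) (negbTE N25) (negbTE N26) (negbTE N34) (negbTE N35) (negbTE N36) (negbTE N45) (negbTE N46) (negbTE N56). Qed.

Lemma cardZ : #|Zs| = 6.
Proof.
move/card_uniqP: uniqE => /= <-; apply: eq_card => X.
by rewrite !inE -!orbA.
Qed.

Lemma s2G : s2 \in G. Proof. by rewrite groupM ?groupV. Qed.

Lemma CJ x g : x \in a ^: G -> g \in G -> g * x * g^-1 \in a ^: G.
Proof.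
move=> xC gG; have -> : g * x * g^-1 = x ^ g^-1 by rewrite conjgE invgK mulgA.
by move/class_eqP: xC => <-; apply: memJ_class; rewrite groupV.
Qed.

Lemma CJ' x g : x \in a ^: G -> g \in G -> g^-1 * x * g \in a ^: G.
Proof. by move=> xC gG; rewrite -mulgA -conjgE; move/class_eqP: xC => <-; apply: memJ_class. Qed.

Lemma inSigma (x1 x2 x3 x4 : gT) : x1 \in a ^: G -> x2 \in a ^: G -> x3 \in a ^: G ->
  x4 \in a ^: G -> a \in [set x1; x2; x3; x4] -> s2 \in [set x1; x2; x3; x4] ->
  x1 * x2 * x3 * x4 = 1 -> cls G (x1, x2, x3, x4) \in Sigma G (a ^: G).
Proof.
move=> h1 h2 h3 h4 ha hs hp; apply/imsetP; exists (x1, x2, x3, x4) => //.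
rewrite inE /= h1 h2 h3 h4 hp eqxx andbT /=.
have sC : a ^: G \subset G by apply: class_subG.
rewrite eqEsubset gen_subG; apply/andP; split.
  apply/subsetP => y; rewrite !inE -!orbA => /or4P[]/eqP->; exact: (subsetP sC).
rewrite -{1}genG; apply: genS; by apply/subsetP => y /set2P[]->.
Qed.

Ltac cm := first [ exact: class_refl | exact: s2C | exact: (CJ s2C aG)
  | exact: (CJ (class_refl _ _) s2G) | exact: (CJ' (class_refl _ _) s2G) ].
Ltac sg := apply: inSigma; [cm | cm | cm | cm | by rewrite !inE eqxx ?orbT
   | by rewrite !inE eqxx ?orbT | by gsimp].

Lemma ZSigma : Zs \subset Sigma G (a ^: G).
Proof.
apply/subsetP; apply: Zs_ind.
- by rewrite /E1 /tup1; sg.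
- by rewrite /E2 /tup2; sg.
- by rewrite /E3 /tup3; sg.
- by rewrite /E4 /tup4; sg.
- by rewrite /E5 /tup5; sg.
- by rewrite /E6 /tup6; sg.
Qed.

Lemma NZ (p : {perm {set T4 gT}}) : p (E1 G a t) \in Zs -> p (E2 G a t) \in Zs ->
  p (E3 G a t) \in Zs -> p (E4 G a t) \in Zs -> p (E5 G a t) \in Zs ->
  p (E6 G a t) \in Zs -> p \in 'N(Zs | 'P).
Proof.
move=> h1 h2 h3 h4 h5 h6.
have sub : p @: Zs \subset Zs.
  by apply/subsetP => _ /imsetP[X XZ ->]; apply: (Zs_ind (P := fun X => p X \in Zs)) XZ.
have eq : p @: Zs = Zs.
  by apply/eqP; rewrite eqEcard sub card_imset ?leqnn //; exact: perm_inj.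
apply/astabsP => X /=; rewrite apermE -{1}eq mem_imset //; exact: perm_inj.
Qed.

Ltac inZ := rewrite !clE /Zs !inE eqxx ?orbT.
Lemma NP3 : P3 gT \in 'N(Zs | 'P). Proof. by apply: NZ; inZ. Qed.
Lemma Neta23 : eta23 gT \in 'N(Zs | 'P). Proof. by apply: NZ; inZ. Qed.
Lemma Neta234 : eta234 gT \in 'N(Zs | 'P). Proof. by apply: NZ; inZ. Qed.
Lemma NP4 : P4 gT \in 'N(Zs | 'P). Proof. by apply: NZ; inZ. Qed.
Lemma Nbeta12 : beta12 gT \in 'N(Zs | 'P). Proof. by apply: NZ; inZ. Qed.
Lemma Nbeta13 : beta13 gT \in 'N(Zs | 'P). Proof. by apply: NZ; inZ. Qed.
Lemma Nbeta14 : beta14 gT \in 'N(Zs | 'P). Proof. by apply: NZ; inZ. Qed.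

End ZPart.

Section Transport.
Variables (K : finGroupType) (Y : finType) (cs : {set K}) (lab : K -> Y).
Hypothesis csJ : forall c s, c \in cs -> c ^ s \in cs.
Hypothesis lab_inj : {in cs &, injective lab}.

Definition tf (s : K) (X : Y) : Y :=
  if [pick c in cs | lab c == X] is Some c then lab (c ^ s) else X.

Lemma tf_lab s c : c \in cs -> tf s (lab c) = lab (c ^ s).
Proof.
move=> cc; rewrite /tf; case: pickP => [c' /andP[c'c /eqP E]|/(_ c)].
  by rewrite (lab_inj c'c cc E).
by rewrite cc eqxx.
Qed.

Lemma tf_out s X : X \notin lab @: cs -> tf s X = X.
Proof.
move=> XN; rewrite /tf; case: pickP => [c /andP[cc /eqP E]|//].
by case/negP: XN; rewrite -E imset_f.
Qed.

Lemma tf_inj s : injective (tf s).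
Proof.
move=> X X'.
case: (boolP (X \in lab @: cs)) => [/imsetP[c cc ->]|XN];
  case: (boolP (X' \in lab @: cs)) => [/imsetP[c' cc' ->]|XN'].
- by rewrite !tf_lab // => /(lab_inj (csJ _ cc) (csJ _ cc'))/conjg_inj->.
- by rewrite tf_lab // tf_out // => E; case/negP: XN'; rewrite -E imset_f // csJ.
- by rewrite tf_lab // tf_out // => E; case/negP: XN; rewrite E imset_f // csJ.
- by rewrite !tf_out.
Qed.

Definition psi s := perm (@tf_inj s).

Lemma psiE s c : c \in cs -> psi s (lab c) = lab (c ^ s).
Proof. by move=> cc; rewrite permE tf_lab. Qed.

Lemma psi_out s X : X \notin lab @: cs -> psi s X = X.
Proof. by move=> XN; rewrite permE tf_out. Qed.

Lemma psiM : {in [set: K] &, {morph psi : x y / x * y}}.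
Proof.
move=> x y _ _; apply/permP => X; rewrite permM.
case: (boolP (X \in lab @: cs)) => [/imsetP[c cc ->]|XN].
  by rewrite !psiE ?conjgM // csJ.
by rewrite !psi_out.
Qed.

Canonical psi_morph := Morphism psiM.

Lemma psi_injm : (forall s, (forall c, c \in cs -> c ^ s = c) -> s = 1) -> 'injm psi.
Proof.
move=> H; apply/injmP => x y _ _ E.
have E' : psi (x * y^-1) = 1.
  by rewrite morphM ?in_setT // morphV ?in_setT //= E mulgV.
have : x * y^-1 = 1.
  apply: H => c cc; apply: lab_inj; [exact: csJ | done |].
  by rewrite -psiE // E' perm1.
by move/(canRL (mulgKV y)); rewrite mul1g.
Qed.

End Transport.

Definition o0 : 'I_4 := @Ordinal 4 0 isT.
Definition o1 : 'I_4 := @Ordinal 4 1 isT.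
Definition o2 : 'I_4 := @Ordinal 4 2 isT.
Definition o3 : 'I_4 := @Ordinal 4 3 isT.
Notation t01 := (tperm o0 o1). Notation t02 := (tperm o0 o2). Notation t03 := (tperm o0 o3).
Notation t12 := (tperm o1 o2). Notation t13 := (tperm o1 o3). Notation t23 := (tperm o2 o3).
Notation q1 := (t01 * t02 * t03).
Notation q2 := (t03 * t02 * t01).
Notation q3 := (t01 * t03 * t02).
Notation q4 := (t02 * t03 * t01).
Notation q5 := (t02 * t01 * t03).
Notation q6 := (t03 * t01 * t02).
Notation sP3 := (t03 * t01 * t02).
Notation s23 := (t01).
Notation s234 := (t13 * t12).
Notation s12 := (t02 * t13).
Notation s13 := (t03 * t12).
Notation s14 := (t01 * t23).
Notation sP4 := (t01 * t02 * t03).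

Lemma ord4_ind (P : 'I_4 -> Prop) : P o0 -> P o1 -> P o2 -> P o3 -> forall y, P y.
Proof.
move=> h0 h1 h2 h3 [[|[|[|[|//]]]] Hy].
- by have -> : Ordinal Hy = o0 by apply/val_inj.
- by have -> : Ordinal Hy = o1 by apply/val_inj.
- by have -> : Ordinal Hy = o2 by apply/val_inj.
- by have -> : Ordinal Hy = o3 by apply/val_inj.
Qed.

Ltac pchk := apply/permP => -[[|[|[|[|//]]]] Hi]; apply/val_inj;
  rewrite /conjg ?invMg ?tpermV ?perm1 !permM ?perm1 /tperm !permE /=.
Ltac pne x := apply/negbTE/eqP => /permP/(_ x)/(congr1 val);
  rewrite ?invMg ?tpermV ?perm1 !permM ?perm1 /tperm !permE /=.

Lemma J_sP3_1 : q1 ^ sP3 = q3. Proof. by pchk. Qed.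
Lemma J_sP3_2 : q2 ^ sP3 = q4. Proof. by pchk. Qed.
Lemma J_sP3_3 : q3 ^ sP3 = q2. Proof. by pchk. Qed.
Lemma J_sP3_4 : q4 ^ sP3 = q1. Proof. by pchk. Qed.
Lemma J_sP3_5 : q5 ^ sP3 = q5. Proof. by pchk. Qed.
Lemma J_sP3_6 : q6 ^ sP3 = q6. Proof. by pchk. Qed.
Lemma J_s23_1 : q1 ^ s23 = q4. Proof. by pchk. Qed.
Lemma J_s23_2 : q2 ^ s23 = q3. Proof. by pchk. Qed.
Lemma J_s23_3 : q3 ^ s23 = q2. Proof. by pchk. Qed.
Lemma J_s23_4 : q4 ^ s23 = q1. Proof. by pchk. Qed.
Lemma J_s23_5 : q5 ^ s23 = q6. Proof. by pchk. Qed.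
Lemma J_s23_6 : q6 ^ s23 = q5. Proof. by pchk. Qed.
Lemma J_s234_1 : q1 ^ s234 = q6. Proof. by pchk. Qed.
Lemma J_s234_2 : q2 ^ s234 = q5. Proof. by pchk. Qed.
Lemma J_s234_3 : q3 ^ s234 = q2. Proof. by pchk. Qed.
Lemma J_s234_4 : q4 ^ s234 = q1. Proof. by pchk. Qed.
Lemma J_s234_5 : q5 ^ s234 = q3. Proof. by pchk. Qed.
Lemma J_s234_6 : q6 ^ s234 = q4. Proof. by pchk. Qed.
Lemma J_s12_1 : q1 ^ s12 = q1. Proof. by pchk. Qed.
Lemma J_s12_2 : q2 ^ s12 = q2. Proof. by pchk. Qed.
Lemma J_s12_3 : q3 ^ s12 = q4. Proof. by pchk. Qed.
Lemma J_s12_4 : q4 ^ s12 = q3. Proof. by pchk. Qed.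
Lemma J_s12_5 : q5 ^ s12 = q6. Proof. by pchk. Qed.
Lemma J_s12_6 : q6 ^ s12 = q5. Proof. by pchk. Qed.
Lemma J_s13_1 : q1 ^ s13 = q2. Proof. by pchk. Qed.
Lemma J_s13_2 : q2 ^ s13 = q1. Proof. by pchk. Qed.
Lemma J_s13_3 : q3 ^ s13 = q3. Proof. by pchk. Qed.
Lemma J_s13_4 : q4 ^ s13 = q4. Proof. by pchk. Qed.
Lemma J_s13_5 : q5 ^ s13 = q6. Proof. by pchk. Qed.
Lemma J_s13_6 : q6 ^ s13 = q5. Proof. by pchk. Qed.
Lemma J_s14_1 : q1 ^ s14 = q2. Proof. by pchk. Qed.
Lemma J_s14_2 : q2 ^ s14 = q1. Proof. by pchk. Qed.
Lemma J_s14_3 : q3 ^ s14 = q4. Proof. by pchk. Qed.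
Lemma J_s14_4 : q4 ^ s14 = q3. Proof. by pchk. Qed.
Lemma J_s14_5 : q5 ^ s14 = q5. Proof. by pchk. Qed.
Lemma J_s14_6 : q6 ^ s14 = q6. Proof. by pchk. Qed.
Lemma J_sP4_1 : q1 ^ sP4 = q1. Proof. by pchk. Qed.
Lemma J_sP4_2 : q2 ^ sP4 = q2. Proof. by pchk. Qed.
Lemma J_sP4_3 : q3 ^ sP4 = q6. Proof. by pchk. Qed.
Lemma J_sP4_4 : q4 ^ sP4 = q5. Proof. by pchk. Qed.
Lemma J_sP4_5 : q5 ^ sP4 = q3. Proof. by pchk. Qed.
Lemma J_sP4_6 : q6 ^ sP4 = q4. Proof. by pchk. Qed.
Lemma J_t01_1 : q1 ^ t01 = q4. Proof. by pchk. Qed.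
Lemma J_t01_2 : q2 ^ t01 = q3. Proof. by pchk. Qed.
Lemma J_t01_3 : q3 ^ t01 = q2. Proof. by pchk. Qed.
Lemma J_t01_4 : q4 ^ t01 = q1. Proof. by pchk. Qed.
Lemma J_t01_5 : q5 ^ t01 = q6. Proof. by pchk. Qed.
Lemma J_t01_6 : q6 ^ t01 = q5. Proof. by pchk. Qed.
Lemma J_t02_1 : q1 ^ t02 = q2. Proof. by pchk. Qed.
Lemma J_t02_2 : q2 ^ t02 = q1. Proof. by pchk. Qed.
Lemma J_t02_3 : q3 ^ t02 = q5. Proof. by pchk. Qed.
Lemma J_t02_4 : q4 ^ t02 = q6. Proof. by pchk. Qed.
Lemma J_t02_5 : q5 ^ t02 = q3. Proof. by pchk. Qed.
Lemma J_t02_6 : q6 ^ t02 = q4. Proof. by pchk. Qed.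
Lemma J_t03_1 : q1 ^ t03 = q6. Proof. by pchk. Qed.
Lemma J_t03_2 : q2 ^ t03 = q5. Proof. by pchk. Qed.
Lemma J_t03_3 : q3 ^ t03 = q4. Proof. by pchk. Qed.
Lemma J_t03_4 : q4 ^ t03 = q3. Proof. by pchk. Qed.
Lemma J_t03_5 : q5 ^ t03 = q2. Proof. by pchk. Qed.
Lemma J_t03_6 : q6 ^ t03 = q1. Proof. by pchk. Qed.
Lemma cn12 : (q1 == q2) = false. Proof. by pne o0. Qed.
Lemma cn13 : (q1 == q3) = false. Proof. by pne o1. Qed.
Lemma cn14 : (q1 == q4) = false. Proof. by pne o0. Qed.
Lemma cn15 : (q1 == q5) = false. Proof. by pne o0. Qed.
Lemma cn16 : (q1 == q6) = false. Proof. by pne o0. Qed.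
Lemma cn23 : (q2 == q3) = false. Proof. by pne o0. Qed.
Lemma cn24 : (q2 == q4) = false. Proof. by pne o0. Qed.
Lemma cn25 : (q2 == q5) = false. Proof. by pne o0. Qed.
Lemma cn26 : (q2 == q6) = false. Proof. by pne o1. Qed.
Lemma cn34 : (q3 == q4) = false. Proof. by pne o0. Qed.
Lemma cn35 : (q3 == q5) = false. Proof. by pne o0. Qed.
Lemma cn36 : (q3 == q6) = false. Proof. by pne o0. Qed.
Lemma cn45 : (q4 == q5) = false. Proof. by pne o1. Qed.
Lemma cn46 : (q4 == q6) = false. Proof. by pne o0. Qed.
Lemma cn56 : (q5 == q6) = false. Proof. by pne o0. Qed.

Definition cs4 : {set 'S_4} := [set q1; q2; q3; q4; q5; q6].

Lemma cs4_ind (P : 'S_4 -> Prop) : P q1 -> P q2 -> P q3 -> P q4 -> P q5 -> P q6 ->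
  forall c, c \in cs4 -> P c.
Proof.
move=> h1 h2 h3 h4 h5 h6 c; rewrite !inE.
by case/orP => [/orP[/orP[/orP[/orP[|]|]|]|]|] /eqP->.
Qed.

Lemma csJ4 c s : c \in cs4 -> c ^ s \in cs4.
Proof.
move=> cc; have : s \in 'N(cs4).
  have : [set: 'S_4] \subset 'N(cs4); last by move/subsetP; apply; rewrite inE.
  rewrite -(gen_tperm o0) gen_subG; apply/subsetP => _ /imsetP[y _ ->].
  rewrite inE; apply/subsetP => _ /imsetP[d dd ->].
  move: y; apply: ord4_ind; first by rewrite tperm1 conjg1.
  - move: d dd; apply: cs4_ind;
      rewrite ?J_t01_1 ?J_t01_2 ?J_t01_3 ?J_t01_4 ?J_t01_5 ?J_t01_6 !inE eqxx ?orbT //.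
  - move: d dd; apply: cs4_ind;
      rewrite ?J_t02_1 ?J_t02_2 ?J_t02_3 ?J_t02_4 ?J_t02_5 ?J_t02_6 !inE eqxx ?orbT //.
  - move: d dd; apply: cs4_ind;
      rewrite ?J_t03_1 ?J_t03_2 ?J_t03_3 ?J_t03_4 ?J_t03_5 ?J_t03_6 !inE eqxx ?orbT //.
by move/memJ_norm => ->.
Qed.

Lemma t03E : t03 = s23 ^ s234. Proof. by pchk. Qed.
Lemma t02E : t02 = s23 ^ (s234 * s234). Proof. by pchk. Qed.
Lemma s12sq : s12 * s12 = 1. Proof. by pchk. Qed.
Lemma s13sq : s13 * s13 = 1. Proof. by pchk. Qed.
Lemma sP3sq : sP3 * sP3 = s14. Proof. by pchk. Qed.
Lemma sP4sq : sP4 * sP4 = s12. Proof. by pchk. Qed.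
Lemma sP34 : sP3^-1 * (sP4 * sP4) * sP3 = s13. Proof. by pchk. Qed.
Lemma s1213 : s12 * s13 = s14. Proof. by pchk. Qed.
Lemma s1312 : s13 * s12 = s14. Proof. by pchk. Qed.
Lemma s12c : s12 = q1 * q1. Proof. by pchk. Qed.
Lemma s13c : s13 = q3 * q3. Proof. by pchk. Qed.
Lemma s14c : s14 = q5 * q5. Proof. by pchk. Qed.
Lemma s12n1 : (s12 == 1) = false. Proof. by pne o0. Qed.
Lemma s13n1 : (s13 == 1) = false. Proof. by pne o0. Qed.
Lemma s1213n : (s12 == s13) = false. Proof. by pne o0. Qed.

Lemma S4_fix s : q1 ^ s = q1 -> q3 ^ s = q3 -> s = 1.
Proof.
move=> e1 e3.
have h1 x : s (q1 x) = q1 (s x).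
  by move: e1; rewrite /conjg => /(canRL (mulKVg s))/permP/(_ x); rewrite !permM.
have h3 x : s (q3 x) = q3 (s x).
  by move: e3; rewrite /conjg => /(canRL (mulKVg s))/permP/(_ x); rewrite !permM.
have v0 : s o0 = o0.
  have := h1 o0; have := h3 o0.
  rewrite [q1 o0]permM [q3 o0]permM !permM /tperm !permE /= => ->.
  move: (s o0); apply: ord4_ind => //;
    rewrite !permM /tperm !permE /= => /(congr1 val).

have v1 : s o1 = o1 by move: (h1 o0); rewrite v0 !permM /tperm !permE /=.
have v2 : s o2 = o2 by move: (h1 o1); rewrite v1 !permM /tperm !permE /=.
have v3 : s o3 = o3 by move: (h1 o2); rewrite v2 !permM /tperm !permE /=.
by apply/permP; apply: ord4_ind; rewrite perm1.
Qed.
Lemma cn21 : (q2 == q1) = false. Proof. by rewrite eq_sym cn12. Qed.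
Lemma cn31 : (q3 == q1) = false. Proof. by rewrite eq_sym cn13. Qed.
Lemma cn41 : (q4 == q1) = false. Proof. by rewrite eq_sym cn14. Qed.
Lemma cn51 : (q5 == q1) = false. Proof. by rewrite eq_sym cn15. Qed.
Lemma cn61 : (q6 == q1) = false. Proof. by rewrite eq_sym cn16. Qed.
Lemma cn32 : (q3 == q2) = false. Proof. by rewrite eq_sym cn23. Qed.
Lemma cn42 : (q4 == q2) = false. Proof. by rewrite eq_sym cn24. Qed.
Lemma cn52 : (q5 == q2) = false. Proof. by rewrite eq_sym cn25. Qed.
Lemma cn62 : (q6 == q2) = false. Proof. by rewrite eq_sym cn26. Qed.
Lemma cn43 : (q4 == q3) = false. Proof. by rewrite eq_sym cn34. Qed.
Lemma cn53 : (q5 == q3) = false. Proof. by rewrite eq_sym cn35. Qed.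
Lemma cn63 : (q6 == q3) = false. Proof. by rewrite eq_sym cn36. Qed.
Lemma cn54 : (q5 == q4) = false. Proof. by rewrite eq_sym cn45. Qed.
Lemma cn64 : (q6 == q4) = false. Proof. by rewrite eq_sym cn46. Qed.
Lemma cn65 : (q6 == q5) = false. Proof. by rewrite eq_sym cn56. Qed.
Definition cnE := (cn12, cn13, cn14, cn15, cn16, cn21, cn23, cn24, cn25, cn26, cn31, cn32, cn34, cn35, cn36, cn41, cn42, cn43, cn45, cn46, cn51, cn52, cn53, cn54, cn56, cn61, cn62, cn63, cn64, cn65).
Definition JE := (J_sP3_1, J_sP3_2, J_sP3_3, J_sP3_4, J_sP3_5, J_sP3_6, J_s23_1, J_s23_2, J_s23_3, J_s23_4, J_s23_5, J_s23_6, J_s234_1, J_s234_2, J_s234_3, J_s234_4, J_s234_5, J_s234_6, J_s12_1, J_s12_2, J_s12_3, J_s12_4, J_s12_5, J_s12_6, J_s13_1, J_s13_2, J_s13_3, J_s13_4, J_s13_5, J_s13_6, J_s14_1, J_s14_2, J_s14_3, J_s14_4, J_s14_5, J_s14_6, J_sP4_1, J_sP4_2, J_sP4_3, J_sP4_4, J_sP4_5, J_sP4_6).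

Section V4.
Variables (hT : finGroupType) (x y : hT).
Hypotheses (xx : x * x = 1) (yy : y * y = 1) (cxy : x * y = y * x).
Hypotheses (x1 : x != 1) (y1 : y != 1) (xy : x != y).

Local Notation V4s := [set 1; x; y; x * y].

Lemma yx_ : y * x = x * y. Proof. by rewrite cxy. Qed.
Lemma yxz z : y * (x * z) = x * (y * z). Proof. by rewrite !mulgA yx_. Qed.
Lemma xxz z : x * (x * z) = z. Proof. by rewrite mulgA xx mul1g. Qed.
Lemma yyz z : y * (y * z) = z. Proof. by rewrite mulgA yy mul1g. Qed.

Ltac vsimp := rewrite -?mulgA; repeat progress rewrite ?mul1g ?mulg1 ?yxz ?yx_ ?xxz ?yyz ?xx ?yy.

Lemma V4_group : group_set V4s.
Proof.
apply/group_setP; split; first by rewrite !inE eqxx.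
move=> u v; rewrite !inE -!orbA => /or4P[]/eqP-> /or4P[]/eqP->; vsimp;
  by rewrite ?inE eqxx ?orbT.
Qed.

Canonical V4_grp := Group V4_group.

Lemma V4_gen (A : {set hT}) : A \subset V4s -> x \in A -> y \in A -> <<A>> = V4s.
Proof.
move=> AV xA yA; apply/eqP; rewrite eqEsubset.
have -> : <<A>> \subset V4s by rewrite gen_subG.
apply/subsetP => z; rewrite !inE -!orbA => /or4P[]/eqP->.
- exact: group1.
- exact: mem_gen.
- exact: mem_gen.
- by rewrite groupM ?mem_gen.
Qed.

Lemma V4_abelian : abelian V4s.
Proof.
rewrite -(V4_gen (A := [set x; y])); last by rewrite !inE eqxx ?orbT.
- rewrite abelian_gen; apply/centsP => u /set2P[]-> v /set2P[]->;
    rewrite /commute ?cxy //.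
- by apply/subsetP => z /set2P[]->; rewrite !inE eqxx ?orbT.
- by rewrite !inE eqxx.
Qed.

Lemma V4_abelem : 2.-abelem V4s.
Proof.
apply/abelemP => //; split; first exact: V4_abelian.
move=> z; rewrite !inE -!orbA => /or4P[]/eqP->; rewrite expgS expg1; vsimp; done.
Qed.

Lemma V4_card : #|V4s| = 4.
Proof.
have n1 : (1 == x) = false by rewrite eq_sym (negbTE x1).
have n2 : (1 == y) = false by rewrite eq_sym (negbTE y1).
have n3 : (1 == x * y) = false.
  by apply/negbTE/eqP => E; case/eqP: xy; apply: (mulgI x); rewrite xx E.
have n4 : (x == y) = false by apply/negbTE.
have n5 : (x == x * y) = false.
  by apply/negbTE/eqP => E; case/eqP: y1; apply: (mulgI x); rewrite mulg1 -E.
have n6 : (y == x * y) = false.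
  by apply/negbTE/eqP => E; case/eqP: x1; apply: (mulIg y); rewrite mul1g -E.
have u : uniq [:: 1; x; y; x * y] by rewrite /= !inE n1 n2 n3 n4 n5 n6.
move/card_uniqP: u => /= <-; apply: eq_card => z.
by rewrite !inE -!orbA.
Qed.

Lemma Z22_abelem : 2.-abelem [set: 'Z_2 * 'Z_2].
Proof.
apply/abelemP => //; split.
  apply/centsP => [[u v]] _ [w z] _; rewrite /commute.
  by congr (_,_); apply: Zp_mulgC.
have z2sq (u : 'Z_2) : u * u = 1 by apply/val_inj; case: u => [[|[|]]] //=.
by move=> [u v] _; rewrite expgS expg1; congr (_,_); apply: z2sq.
Qed.

Lemma V4_isog : V4s \isog [set: 'Z_2 * 'Z_2].
Proof.
rewrite isog_sym (isog_abelem_card _ Z22_abelem) V4_abelem /=.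
by rewrite V4_card cardsT card_prod card_ord.
Qed.

End V4.

Section Iso.
Variables (gT : finGroupType) (G : {group gT}) (a t : gT).
Hypotheses (aG : a \in G) (tG : t \in G) (tt1 : t * t = 1).
Hypothesis nc : a * t != t * a.
Local Notation s2 := (a^-1 * t).
Hypothesis genG : <<[set a; s2]>> = G.
Hypothesis ZG : 'Z(G) = 1.

Let clE := (@P3_1 _ _ _ _ aG tG tt1, @P3_2 _ _ _ _ aG tG tt1, @P3_3 _ _ _ _ aG tG tt1, @P3_4 _ _ _ _ aG tG tt1, @P3_5 _ _ _ _ aG tG tt1, @P3_6 _ _ _ _ aG tG tt1, @eta23_1 _ _ _ _ aG tG tt1, @eta23_2 _ _ _ _ aG tG tt1, @eta23_3 _ _ _ _ aG tG tt1, @eta23_4 _ _ _ _ aG tG tt1, @eta23_5 _ _ _ _ aG tG tt1, @eta23_6 _ _ _ _ aG tG tt1, @eta234_1 _ _ _ _ aG tG tt1, @eta234_2 _ _ _ _ aG tG tt1, @eta234_3 _ _ _ _ aG tG tt1, @eta234_4 _ _ _ _ aG tG tt1, @eta234_5 _ _ _ _ aG tG tt1, @eta234_6 _ _ _ _ aG tG tt1, @P4_1 _ _ _ _ aG tG tt1, @P4_2 _ _ _ _ aG tG tt1, @P4_3 _ _ _ _ aG tG tt1, @P4_4 _ _ _ _ aG tG tt1, @P4_5 _ _ _ _ aG tG tt1, @P4_6 _ _ _ _ aG tG tt1, @beta12_1 _ _ _ _ aG tG tt1, @beta12_2 _ _ _ _ aG tG tt1, @beta12_3 _ _ _ _ aG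 tG tt1, @beta12_4 _ _ _ _ aG tG tt1, @beta12_5 _ _ _ _ aG tG tt1, @beta12_6 _ _ _ _ aG tG tt1, @beta13_1 _ _ _ _ aG tG tt1, @beta13_2 _ _ _ _ aG tG tt1, @beta13_3 _ _ _ _ aG tG tt1, @beta13_4 _ _ _ _ aG tG tt1, @beta13_5 _ _ _ _ aG tG tt1, @beta13_6 _ _ _ _ aG tG tt1, @beta14_1 _ _ _ _ aG tG tt1, @beta14_2 _ _ _ _ aG tG tt1, @beta14_3 _ _ _ _ aG tG tt1, @beta14_4 _ _ _ _ aG tG tt1, @beta14_5 _ _ _ _ aG tG tt1, @beta14_6 _ _ _ _ aG tG tt1).
Let N12 := n12 aG tG tt1 nc genG ZG.
Let N21 : E2 G a t != E1 G a t. Proof. by rewrite eq_sym N12. Qed.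
Let N13 := n13 aG tG tt1 nc genG ZG.
Let N31 : E3 G a t != E1 G a t. Proof. by rewrite eq_sym N13. Qed.
Let N14 := n14 aG tG tt1 nc genG ZG.
Let N41 : E4 G a t != E1 G a t. Proof. by rewrite eq_sym N14. Qed.
Let N15 := n15 aG tG tt1 nc genG ZG.
Let N51 : E5 G a t != E1 G a t. Proof. by rewrite eq_sym N15. Qed.
Let N16 := n16 aG tG tt1 nc genG ZG.
Let N61 : E6 G a t != E1 G a t. Proof. by rewrite eq_sym N16. Qed.
Let N23 := n23 aG tG tt1 nc genG ZG.
Let N32 : E3 G a t != E2 G a t. Proof. by rewrite eq_sym N23. Qed.
Let N24 := n24 aG tG tt1 nc genG ZG.
Let N42 : E4 G a t != E2 G a t. Proof. by rewrite eq_sym N24. Qed.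
Let N25 := n25 aG tG tt1 nc genG ZG.
Let N52 : E5 G a t != E2 G a t. Proof. by rewrite eq_sym N25. Qed.
Let N26 := n26 aG tG tt1 nc genG ZG.
Let N62 : E6 G a t != E2 G a t. Proof. by rewrite eq_sym N26. Qed.
Let N34 := n34 aG tG tt1 nc genG ZG.
Let N43 : E4 G a t != E3 G a t. Proof. by rewrite eq_sym N34. Qed.
Let N35 := n35 aG tG tt1 nc genG ZG.
Let N53 : E5 G a t != E3 G a t. Proof. by rewrite eq_sym N35. Qed.
Let N36 := n36 aG tG tt1 nc genG ZG.
Let N63 : E6 G a t != E3 G a t. Proof. by rewrite eq_sym N36. Qed.
Let N45 := n45 aG tG tt1 nc genG ZG.
Let N54 : E5 G a t != E4 G a t. Proof. by rewrite eq_sym N45. Qed.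
Let N46 := n46 aG tG tt1 nc genG ZG.
Let N64 : E6 G a t != E4 G a t. Proof. by rewrite eq_sym N46. Qed.
Let N56 := n56 aG tG tt1 nc genG ZG.
Let N65 : E6 G a t != E5 G a t. Proof. by rewrite eq_sym N56. Qed.
Let nE := (negbTE N12, negbTE N21, negbTE N13, negbTE N31, negbTE N14, negbTE N41, negbTE N15, negbTE N51, negbTE N16, negbTE N61, negbTE N23, negbTE N32, negbTE N24, negbTE N42, negbTE N25, negbTE N52, negbTE N26, negbTE N62, negbTE N34, negbTE N43, negbTE N35, negbTE N53, negbTE N36, negbTE N63, negbTE N45, negbTE N54, negbTE N46, negbTE N64, negbTE N56, negbTE N65).

Definition lab (c : 'S_4) : {set T4 gT} :=
  if c == q1 then E1 G a t else if c == q2 then E2 G a t else if c == q3 then E3 G a t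
  else if c == q4 then E4 G a t else if c == q5 then E5 G a t else E6 G a t.

Lemma labE1 : lab q1 = E1 G a t. Proof. by rewrite /lab ?cnE eqxx. Qed.
Lemma labE2 : lab q2 = E2 G a t. Proof. by rewrite /lab ?cnE eqxx. Qed.
Lemma labE3 : lab q3 = E3 G a t. Proof. by rewrite /lab ?cnE eqxx. Qed.
Lemma labE4 : lab q4 = E4 G a t. Proof. by rewrite /lab ?cnE eqxx. Qed.
Lemma labE5 : lab q5 = E5 G a t. Proof. by rewrite /lab ?cnE eqxx. Qed.
Lemma labE6 : lab q6 = E6 G a t. Proof. by rewrite /lab ?cnE. Qed.
Definition labE := (labE1, labE2, labE3, labE4, labE5, labE6).

Lemma lab_inj : {in cs4 &, injective lab}.
Proof.
move=> c d cc dd; move: c cc d dd; apply: cs4_ind => d dd; move: d dd;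
  apply: cs4_ind; rewrite !labE // => /eqP; rewrite ?nE //.
Qed.

Definition psiZ := psi_morph csJ4 lab_inj.

Lemma Zlab : lab @: cs4 = Zs G a t.
Proof. by rewrite /cs4 /Zs !imsetU ?imsetU1 !imset_set1 !labE. Qed.

Lemma psiZ_inj : 'injm psiZ.
Proof.
apply: psi_injm => s H; apply: S4_fix; apply: H; by rewrite !inE eqxx ?orbT.
Qed.

Lemma restr_psi (p : {perm {set T4 gT}}) s : p \in 'N(Zs G a t | 'P) ->
  (forall c, c \in cs4 -> p (lab c) = lab (c ^ s)) -> restr_perm (Zs G a t) p = psiZ s.
Proof.
move=> pN H; apply/permP => X.
case: (boolP (X \in Zs G a t)) => XZ.
  rewrite restr_permE //; move: XZ; rewrite -Zlab => /imsetP[c cc ->].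
  by rewrite H // psiE.
rewrite (out_perm (restr_perm_on _ _)) // psi_out //; by rewrite Zlab.
Qed.

End Iso.

Lemma sub6 (T : finType) (A : {set T}) x1 x2 x3 x4 x5 x6 : x1 \in A -> x2 \in A ->
  x3 \in A -> x4 \in A -> x5 \in A -> x6 \in A -> [set x1; x2; x3; x4; x5; x6] \subset A.
Proof.
move=> h1 h2 h3 h4 h5 h6; apply/subsetP => z.
by rewrite !inE -!orbA => /or4P[| | |/or3P[]] /eqP->.
Qed.

Lemma sub3 (T : finType) (A : {set T}) x1 x2 x3 : x1 \in A -> x2 \in A ->
  x3 \in A -> [set x1; x2; x3] \subset A.
Proof.
move=> h1 h2 h3; apply/subsetP => z.
by rewrite !inE -!orbA => /or3P[] /eqP->.
Qed.

Section Iso2.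
Variables (gT : finGroupType) (G : {group gT}) (a t : gT).
Hypotheses (aG : a \in G) (tG : t \in G) (tt1 : t * t = 1).
Hypothesis nc : a * t != t * a.
Local Notation s2 := (a^-1 * t).
Hypothesis genG : <<[set a; s2]>> = G.
Hypothesis ZG : 'Z(G) = 1.

Let clE := (@P3_1 _ _ _ _ aG tG tt1, @P3_2 _ _ _ _ aG tG tt1, @P3_3 _ _ _ _ aG tG tt1, @P3_4 _ _ _ _ aG tG tt1, @P3_5 _ _ _ _ aG tG tt1, @P3_6 _ _ _ _ aG tG tt1, @eta23_1 _ _ _ _ aG tG tt1, @eta23_2 _ _ _ _ aG tG tt1, @eta23_3 _ _ _ _ aG tG tt1, @eta23_4 _ _ _ _ aG tG tt1, @eta23_5 _ _ _ _ aG tG tt1, @eta23_6 _ _ _ _ aG tG tt1, @eta234_1 _ _ _ _ aG tG tt1, @eta234_2 _ _ _ _ aG tG tt1, @eta234_3 _ _ _ _ aG tG tt1, @eta234_4 _ _ _ _ aG tG tt1, @eta234_5 _ _ _ _ aG tG tt1, @eta234_6 _ _ _ _ aG tG tt1, @P4_1 _ _ _ _ aG tG tt1, @P4_2 _ _ _ _ aG tG tt1, @P4_3 _ _ _ _ aG tG tt1, @P4_4 _ _ _ _ aG tG tt1, @P4_5 _ _ _ _ aG tG tt1, @P4_6 _ _ _ _ aG tG tt1, @beta12_1 _ _ _ _ aG tG tt1, @beta12_2 _ _ _ _ aG tG tt1, @beta12_3 _ _ _ _ aG tG tt1, @beta12_4 _ _ _ _ aG tG tt1, @beta12_5 _ _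 _ _ aG tG tt1, @beta12_6 _ _ _ _ aG tG tt1, @beta13_1 _ _ _ _ aG tG tt1, @beta13_2 _ _ _ _ aG tG tt1, @beta13_3 _ _ _ _ aG tG tt1, @beta13_4 _ _ _ _ aG tG tt1, @beta13_5 _ _ _ _ aG tG tt1, @beta13_6 _ _ _ _ aG tG tt1, @beta14_1 _ _ _ _ aG tG tt1, @beta14_2 _ _ _ _ aG tG tt1, @beta14_3 _ _ _ _ aG tG tt1, @beta14_4 _ _ _ _ aG tG tt1, @beta14_5 _ _ _ _ aG tG tt1, @beta14_6 _ _ _ _ aG tG tt1).
Local Notation Z := (Zs G a t).
Local Notation ps := (psiZ aG tG tt1 nc genG ZG).

Lemma rP3 : restr_perm Z (P3 gT) = ps sP3.
Proof. apply: (restr_psi aG tG tt1 nc genG ZG (NP3 aG tG tt1)); apply: cs4_ind; by rewrite !labE !clE !JE !labE. Qed.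
Lemma rE23 : restr_perm Z (eta23 gT) = ps s23.
Proof. apply: (restr_psi aG tG tt1 nc genG ZG (Neta23 aG tG tt1)); apply: cs4_ind; by rewrite !labE !clE !JE !labE. Qed.
Lemma rE234 : restr_perm Z (eta234 gT) = ps s234.
Proof. apply: (restr_psi aG tG tt1 nc genG ZG (Neta234 aG tG tt1)); apply: cs4_ind; by rewrite !labE !clE !JE !labE. Qed.
Lemma rP4 : restr_perm Z (P4 gT) = ps sP4.
Proof. apply: (restr_psi aG tG tt1 nc genG ZG (NP4 aG tG tt1)); apply: cs4_ind; by rewrite !labE !clE !JE !labE. Qed.
Lemma rB12 : restr_perm Z (beta12 gT) = ps s12.
Proof. apply: (restr_psi aG tG tt1 nc genG ZG (Nbeta12 aG tG tt1)); apply: cs4_ind; by rewrite !labE !clE !JE !labE. Qed.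
Lemma rB13 : restr_perm Z (beta13 gT) = ps s13.
Proof. apply: (restr_psi aG tG tt1 nc genG ZG (Nbeta13 aG tG tt1)); apply: cs4_ind; by rewrite !labE !clE !JE !labE. Qed.
Lemma rB14 : restr_perm Z (beta14 gT) = ps s14.
Proof. apply: (restr_psi aG tG tt1 nc genG ZG (Nbeta14 aG tG tt1)); apply: cs4_ind; by rewrite !labE !clE !JE !labE. Qed.

Lemma inj_ps : {in [set: 'S_4] &, injective ps}.
Proof. exact/injmP/psiZ_inj. Qed.

Lemma imTgen : <<[set ps sP3; ps s23; ps s234]>> = ps @* [set: 'S_4].
Proof.
apply/eqP; rewrite eqEsubset; apply/andP; split.
  by rewrite gen_subG; apply: sub3; apply: mem_morphim; rewrite in_setT.
have -> : ps @* [set: 'S_4] = ps @* <<[set tperm o0 y | y : 'I_4]>> by rewrite gen_tperm.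
rewrite morphim_gen ?subsetT // gen_subG.
apply/subsetP => _ /morphimP[x _ /imsetP[y _ ->] ->]; move: y; apply: ord4_ind.
- by rewrite tperm1 morph1 group1.
- by rewrite mem_gen // !inE eqxx ?orbT.
- rewrite t02E morphJ ?in_setT // morphM ?in_setT //.
  by rewrite groupJ ?groupM ?mem_gen // !inE eqxx ?orbT.
- rewrite t03E morphJ ?in_setT //.
  by rewrite groupJ ?groupM ?mem_gen // !inE eqxx ?orbT.
Qed.

Lemma imBgen : <<[set ps s12; ps s13; ps s14; ps sP3; ps s23; ps s234]>> = ps @* [set: 'S_4].
Proof.
apply/eqP; rewrite eqEsubset; apply/andP; split.
  by rewrite gen_subG; apply: sub6; apply: mem_morphim; rewrite in_setT.
rewrite -imTgen genS //; apply: sub3; by rewrite !inE eqxx ?orbT.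
Qed.

Lemma NT : [set P3 gT; eta23 gT; eta234 gT] \subset 'N(Z | 'P).
Proof. by apply: sub3; [exact: NP3 | exact: Neta23 | exact: Neta234]. Qed.

Lemma NBsy : [set beta12 gT; beta13 gT; beta14 gT; P3 gT; eta23 gT; eta234 gT] \subset 'N(Z | 'P).
Proof.
by apply: sub6; [exact: Nbeta12 | exact: Nbeta13 | exact: Nbeta14 | exact: NP3
  | exact: Neta23 | exact: Neta234].
Qed.

Lemma imT : restr_perm Z @* Tgrp gT = ps @* [set: 'S_4].
Proof.
rewrite /Tgrp /= morphim_gen ?NT // morphimEsub ?NT //.
by rewrite !imsetU ?imsetU1 !imset_set1 /= rP3 rE23 rE234 imTgen.
Qed.

Lemma imBsy : restr_perm Z @* B4sy gT = ps @* [set: 'S_4].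
Proof.
rewrite /B4sy /= morphim_gen ?NBsy // morphimEsub ?NBsy //.
by rewrite !imsetU ?imsetU1 !imset_set1 /= rB12 rB13 rB14 rP3 rE23 rE234 imBgen.
Qed.

Lemma isoS4 (A : {set {perm {set T4 gT}}}) : A = ps @* [set: 'S_4] -> A \isog [set: 'S_4].
Proof. by move=> ->; rewrite isog_sym; apply: sub_isog (subsetT _) (psiZ_inj _ _ _ _ _ _). Qed.

Lemma NB4 : [set beta12 gT; beta13 gT; beta14 gT; beta23 gT; beta24 gT; beta34 gT] \subset 'N(Z | 'P).
Proof.
have N3 := NP3 aG tG tt1; have N4 := NP4 aG tG tt1.
apply: sub6; [exact: Nbeta12 | exact: Nbeta13 | exact: Nbeta14 | | |].
- by rewrite /beta23 groupM.
- by rewrite /beta24 !groupM ?groupV.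
- by rewrite /beta34 groupM.
Qed.

Lemma rB23 : restr_perm Z (beta23 gT) = ps s14.
Proof.
have N3 := NP3 aG tG tt1.
by rewrite /beta23 morphM //= rP3 -morphM ?in_setT // sP3sq.
Qed.

Lemma rB34 : restr_perm Z (beta34 gT) = ps s12.
Proof.
have N4 := NP4 aG tG tt1.
by rewrite /beta34 morphM //= rP4 -morphM ?in_setT // sP4sq.
Qed.

Lemma rB24 : restr_perm Z (beta24 gT) = ps s13.
Proof.
have N3 := NP3 aG tG tt1; have N4 := NP4 aG tG tt1.
rewrite /beta24 [in LHS]morphM ?groupM ?groupV // [in LHS]morphM ?groupV ?groupM //.
rewrite [in LHS]morphM // [in LHS]morphV //= rP3 rP4.
by rewrite -morphV ?in_setT // -!morphM ?in_setT // sP34.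
Qed.

Lemma ps12 : ps s12 * ps s12 = 1. Proof. by rewrite -morphM ?in_setT // s12sq morph1. Qed.
Lemma ps13 : ps s13 * ps s13 = 1. Proof. by rewrite -morphM ?in_setT // s13sq morph1. Qed.
Lemma psc : ps s12 * ps s13 = ps s13 * ps s12.
Proof. by rewrite -!morphM ?in_setT // s1213 s1312. Qed.
Lemma ps14 : ps s14 = ps s12 * ps s13. Proof. by rewrite -morphM ?in_setT // s1213. Qed.
Lemma ps12n : ps s12 != 1.
Proof.
apply/eqP => E; have := inj_ps (in_setT s12) (in_setT 1); rewrite E morph1.
by move/(_ erefl)/eqP; rewrite s12n1.
Qed.
Lemma ps13n : ps s13 != 1.
Proof.
apply/eqP => E; have := inj_ps (in_setT s13) (in_setT 1); rewrite E morph1.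
by move/(_ erefl)/eqP; rewrite s13n1.
Qed.
Lemma ps1213n : ps s12 != ps s13.
Proof.
apply/eqP => E; have := inj_ps (in_setT s12) (in_setT s13); rewrite E.
by move/(_ erefl)/eqP; rewrite s1213n.
Qed.

Lemma imB4 : restr_perm Z @* B4 gT = [set 1; ps s12; ps s13; ps s12 * ps s13].
Proof.
rewrite /B4 /= morphim_gen ?NB4 // morphimEsub ?NB4 //.
rewrite !imsetU ?imsetU1 !imset_set1 /= rB12 rB13 rB14 rB23 rB24 rB34 ps14.
apply: V4_gen; [exact: ps12 | exact: ps13 | exact: psc | | |].
- by apply: sub6; rewrite !inE eqxx ?orbT.
- by rewrite !inE eqxx ?orbT.
- by rewrite !inE eqxx ?orbT.
Qed.

Lemma isoB4 : restr_perm Z @* B4 gT \isog [set: 'Z_2 * 'Z_2].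
Proof.
rewrite imB4; apply: V4_isog; [exact: ps12 | exact: ps13 | exact: psc | exact: ps12n
  | exact: ps13n | exact: ps1213n].
Qed.

Lemma evenB4 : {in B4 gT, forall p, ~~ odd_perm (restr_perm Z p)}.
Proof.
move=> p pB.
have : restr_perm Z p \in restr_perm Z @* B4 gT.
  apply: mem_morphim => //; move: pB; apply/subsetP.
  by rewrite /B4 /= gen_subG NB4.
rewrite imB4 !inE -!orbA => /or4P[]/eqP->.
- by rewrite odd_perm1.
- by rewrite s12c morphM ?in_setT // odd_permM addbb.
- by rewrite s13c morphM ?in_setT // odd_permM addbb.
- by rewrite -morphM ?in_setT // s1213 s14c morphM ?in_setT // odd_permM addbb.
Qed.

End Iso2.

Lemma porbit_step (T : finType) (s : {perm T}) x : porbit s (s x) = porbit s x.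
Proof. by apply/eqP; rewrite eq_porbit_mem; apply/porbitP; exists 1%N; rewrite expg1. Qed.

Lemma porbit_sub (T : finType) (s : {perm T}) (A : {set T}) x :
  x \in A -> (forall y, y \in A -> s y \in A) -> porbit s x \subset A.
Proof.
move=> xA sA; apply/subsetP => _ /porbitP[i ->].
elim: i => [|i IH]; first by rewrite expg0 perm1.
by rewrite expgSr permM sA.
Qed.

Lemma card2 (T : finType) (x y : T) : x != y -> #|[set x; y]| = 2.
Proof.
move=> n1; have u : uniq [:: x; y] by rewrite /= inE n1.
by move/card_uniqP: u => /= <-; apply: eq_card => z; rewrite !inE.
Qed.

Lemma card3 (T : finType) (x y z : T) : x != y -> x != z -> y != z -> #|[set x; y; z]| = 3.
Proof.
move=> n1 n2 n3; have u : uniq [:: x; y; z] by rewrite /= !inE negb_or n1 n2 n3.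
by move/card_uniqP: u => /= <-; apply: eq_card => w; rewrite !inE -!orbA.
Qed.

Section Final.
Variables (gT : finGroupType) (G : {group gT}) (a t : gT).
Hypotheses (aG : a \in G) (tG : t \in G) (tt1 : t * t = 1).
Hypothesis nc : a * t != t * a.
Local Notation s2 := (a^-1 * t).
Hypothesis genG : <<[set a; s2]>> = G.
Hypothesis ZG : 'Z(G) = 1.

Let clE := (@P3_1 _ _ _ _ aG tG tt1, @P3_2 _ _ _ _ aG tG tt1, @P3_3 _ _ _ _ aG tG tt1, @P3_4 _ _ _ _ aG tG tt1, @P3_5 _ _ _ _ aG tG tt1, @P3_6 _ _ _ _ aG tG tt1, @eta23_1 _ _ _ _ aG tG tt1, @eta23_2 _ _ _ _ aG tG tt1, @eta23_3 _ _ _ _ aG tG tt1, @eta23_4 _ _ _ _ aG tG tt1, @eta23_5 _ _ _ _ aG tG tt1, @eta23_6 _ _ _ _ aG tG tt1, @eta234_1 _ _ _ _ aG tG tt1, @eta234_2 _ _ _ _ aG tG tt1, @eta234_3 _ _ _ _ aG tG tt1, @eta234_4 _ _ _ _ aG tG tt1, @eta234_5 _ _ _ _ aG tG tt1, @eta234_6 _ _ _ _ aG tG tt1, @P4_1 _ _ _ _ aG tG tt1, @P4_2 _ _ _ _ aG tG tt1, @P4_3 _ _ _ _ aG tG tt1, @P4_4 _ _ _ _ aG tG tt1, @P4_5 _ _ _ _ aG tG tt1, @P4_6 _ _ _ _ aG tG tt1, @beta12_1 _ _ _ _ aG tG tt1, @beta12_2 _ _ _ _ aG tG tt1, @beta12_3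 _ _ _ _ aG tG tt1, @beta12_4 _ _ _ _ aG tG tt1, @beta12_5 _ _ _ _ aG tG tt1, @beta12_6 _ _ _ _ aG tG tt1, @beta13_1 _ _ _ _ aG tG tt1, @beta13_2 _ _ _ _ aG tG tt1, @beta13_3 _ _ _ _ aG tG tt1, @beta13_4 _ _ _ _ aG tG tt1, @beta13_5 _ _ _ _ aG tG tt1, @beta13_6 _ _ _ _ aG tG tt1, @beta14_1 _ _ _ _ aG tG tt1, @beta14_2 _ _ _ _ aG tG tt1, @beta14_3 _ _ _ _ aG tG tt1, @beta14_4 _ _ _ _ aG tG tt1, @beta14_5 _ _ _ _ aG tG tt1, @beta14_6 _ _ _ _ aG tG tt1).
Let N12 := n12 aG tG tt1 nc genG ZG.
Let N13 := n13 aG tG tt1 nc genG ZG.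
Let N14 := n14 aG tG tt1 nc genG ZG.
Let N15 := n15 aG tG tt1 nc genG ZG.
Let N16 := n16 aG tG tt1 nc genG ZG.
Let N23 := n23 aG tG tt1 nc genG ZG.
Let N24 := n24 aG tG tt1 nc genG ZG.
Let N25 := n25 aG tG tt1 nc genG ZG.
Let N26 := n26 aG tG tt1 nc genG ZG.
Let N34 := n34 aG tG tt1 nc genG ZG.
Let N35 := n35 aG tG tt1 nc genG ZG.
Let N36 := n36 aG tG tt1 nc genG ZG.
Let N45 := n45 aG tG tt1 nc genG ZG.
Let N46 := n46 aG tG tt1 nc genG ZG.
Let N56 := n56 aG tG tt1 nc genG ZG.
Local Notation Z := (Zs G a t).
Local Notation e1 := (E1 G a t).
Local Notation e2 := (E2 G a t).
Local Notation e3 := (E3 G a t).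
Local Notation e4 := (E4 G a t).
Local Notation e5 := (E5 G a t).
Local Notation e6 := (E6 G a t).

Lemma maps1 : [/\ map (beta12 gT) [:: e1; e2; e3; e4; e5; e6] = [:: e1; e2; e4; e3; e6; e5],
          map (beta13 gT) [:: e1; e2; e3; e4; e5; e6] = [:: e2; e1; e3; e4; e6; e5]
        & map (beta14 gT) [:: e1; e2; e3; e4; e5; e6] = [:: e2; e1; e4; e3; e5; e6]].
Proof. by split; rewrite /= !clE. Qed.

Lemma maps2 : [/\ map (P3 gT) [:: e1; e2; e3; e4; e5; e6] = [:: e3; e4; e2; e1; e5; e6],
          map (eta23 gT) [:: e1; e2; e3; e4; e5; e6] = [:: e4; e3; e2; e1; e6; e5]
        & map (eta234 gT) [:: e1; e2; e3; e4; e5; e6] = [:: e6; e5; e2; e1; e3; e4]].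
Proof. by split; rewrite /= !clE. Qed.

Lemma B4syN : B4sy gT \subset 'N(Z | 'P).
Proof. by rewrite /B4sy /= gen_subG NBsy. Qed.

Lemma orbitZ : orbit 'P (B4sy gT) e1 = Z.
Proof.
apply/eqP; rewrite eqEsubset (acts_sub_orbit _ B4syN) !inE eqxx /=.
have mB x : x \in B4sy gT -> x e1 \in orbit 'P (B4sy gT) e1.
  by move=> xB; rewrite -apermE mem_orbit.
have P3B : P3 gT \in B4sy gT by rewrite mem_gen // !inE eqxx ?orbT.
have eB : eta234 gT \in B4sy gT by rewrite mem_gen // !inE eqxx ?orbT.
apply: sub6.
- exact: orbit_refl.
- by rewrite -(P3_3 aG tG tt1) -(P3_1 aG tG tt1) -!permM mB ?groupM.
- by rewrite -(P3_1 aG tG tt1) mB.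
- by rewrite -(P3_2 aG tG tt1) -(P3_3 aG tG tt1) -(P3_1 aG tG tt1) -!permM mB ?groupM.
- by rewrite -(eta234_2 aG tG tt1) -(P3_3 aG tG tt1) -(P3_1 aG tG tt1) -!permM mB ?groupM.
- by rewrite -(eta234_1 aG tG tt1) mB.
Qed.

Lemma ncP3 : ncycles Z (P3 gT) = 3.
Proof.
rewrite /ncycles !imsetU ?imsetU1 !imset_set1.
have o3 : porbit (P3 gT) e3 = porbit (P3 gT) e1 by rewrite -(P3_1 aG tG tt1) porbit_step.
have o2 : porbit (P3 gT) e2 = porbit (P3 gT) e1 by rewrite -(P3_3 aG tG tt1) porbit_step o3.
have o4 : porbit (P3 gT) e4 = porbit (P3 gT) e1 by rewrite -(P3_2 aG tG tt1) porbit_step o2.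
have s1 : porbit (P3 gT) e1 \subset [set e1; e3; e2; e4].
  apply: porbit_sub; first by rewrite !inE eqxx.
  by move=> y; rewrite !inE -!orbA => /or4P[]/eqP->; rewrite !clE ?inE eqxx ?orbT.
have s5 : porbit (P3 gT) e5 \subset [set e5].
  by apply: porbit_sub => [|y /set1P->]; rewrite ?clE ?inE.
have s6 : porbit (P3 gT) e6 \subset [set e6].
  by apply: porbit_sub => [|y /set1P->]; rewrite ?clE ?inE.
rewrite o2 o3 o4.
have -> : [set porbit (P3 gT) e1; porbit (P3 gT) e1; porbit (P3 gT) e1; porbit (P3 gT) e1;
   porbit (P3 gT) e5; porbit (P3 gT) e6] = [set porbit (P3 gT) e1; porbit (P3 gT) e5; porbit (P3 gT) e6].
  by apply/setP => X; rewrite !inE; case: (X == porbit (P3 gT) e1).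
apply: card3; apply/eqP => E.
- by have := porbit_id (P3 gT) e1; rewrite E => /(subsetP s5); rewrite inE (negbTE N15).
- by have := porbit_id (P3 gT) e1; rewrite E => /(subsetP s6); rewrite inE (negbTE N16).
- by have := porbit_id (P3 gT) e5; rewrite E => /(subsetP s6); rewrite inE (negbTE N56).
Qed.

Lemma nc23 : ncycles Z (eta23 gT) = 3.
Proof.
rewrite /ncycles !imsetU ?imsetU1 !imset_set1.
have o4 : porbit (eta23 gT) e4 = porbit (eta23 gT) e1 by rewrite -(eta23_1 aG tG tt1) porbit_step.
have o3 : porbit (eta23 gT) e3 = porbit (eta23 gT) e2 by rewrite -(eta23_2 aG tG tt1) porbit_step.
have o6 : porbit (eta23 gT) e6 = porbit (eta23 gT) e5 by rewrite -(eta23_5 aG tG tt1) porbit_step.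
have s1 : porbit (eta23 gT) e1 \subset [set e1; e4].
  apply: porbit_sub; first by rewrite !inE eqxx.
  by move=> y /set2P[]->; rewrite !clE ?inE eqxx ?orbT.
have s2' : porbit (eta23 gT) e2 \subset [set e2; e3].
  apply: porbit_sub; first by rewrite !inE eqxx.
  by move=> y /set2P[]->; rewrite !clE ?inE eqxx ?orbT.
have s5 : porbit (eta23 gT) e5 \subset [set e5; e6].
  apply: porbit_sub; first by rewrite !inE eqxx.
  by move=> y /set2P[]->; rewrite !clE ?inE eqxx ?orbT.
rewrite o3 o4 o6.
have -> : [set porbit (eta23 gT) e1; porbit (eta23 gT) e2; porbit (eta23 gT) e2; porbit (eta23 gT) e1;
   porbit (eta23 gT) e5; porbit (eta23 gT) e5] = [set porbit (eta23 gT) e1; porbit (eta23 gT) e2; porbit (eta23 gT) e5].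
  by apply/setP => X; rewrite !inE; case: (X == porbit (eta23 gT) e1); case: (X == porbit (eta23 gT) e2); rewrite /= ?orbb.
apply: card3; apply/eqP => E.
- by have := porbit_id (eta23 gT) e1; rewrite E => /(subsetP s2'); rewrite !inE (negbTE N12) (negbTE N13).
- by have := porbit_id (eta23 gT) e1; rewrite E => /(subsetP s5); rewrite !inE (negbTE N15) (negbTE N16).
- by have := porbit_id (eta23 gT) e2; rewrite E => /(subsetP s5); rewrite !inE (negbTE N25) (negbTE N26).
Qed.

Lemma nc234 : ncycles Z (eta234 gT) = 2.
Proof.
rewrite /ncycles !imsetU ?imsetU1 !imset_set1.
have o6 : porbit (eta234 gT) e6 = porbit (eta234 gT) e1 by rewrite -(eta234_1 aG tG tt1) porbit_step.
have o4 : porbit (eta234 gT) e4 = porbit (eta234 gT) e1 by rewrite -(eta234_6 aG tG tt1) porbit_step o6.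
have o5 : porbit (eta234 gT) e5 = porbit (eta234 gT) e2 by rewrite -(eta234_2 aG tG tt1) porbit_step.
have o3 : porbit (eta234 gT) e3 = porbit (eta234 gT) e2 by rewrite -(eta234_5 aG tG tt1) porbit_step o5.
have s1 : porbit (eta234 gT) e1 \subset [set e1; e6; e4].
  apply: porbit_sub; first by rewrite !inE eqxx.
  by move=> y; rewrite !inE -!orbA => /or3P[]/eqP->; rewrite !clE ?inE eqxx ?orbT.
rewrite o3 o4 o5 o6.
have -> : [set porbit (eta234 gT) e1; porbit (eta234 gT) e2; porbit (eta234 gT) e2; porbit (eta234 gT) e1;
   porbit (eta234 gT) e2; porbit (eta234 gT) e1] = [set porbit (eta234 gT) e1; porbit (eta234 gT) e2].
  by apply/setP => X; rewrite !inE; case: (X == porbit (eta234 gT) e1); case: (X == porbit (eta234 gT) e2).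
apply: card2; apply/eqP => E.
have := porbit_id (eta234 gT) e2; rewrite -E => /(subsetP s1).
by rewrite !inE eq_sym (negbTE N12) (negbTE N26) (negbTE N24).
Qed.

Lemma genusZ : genus #|Z| (ncycles Z (P3 gT)) (ncycles Z (eta23 gT)) (ncycles Z (eta234 gT)) = 0%R.
Proof.
rewrite ncP3 nc23 nc234 (cardZ aG tG tt1 nc genG ZG) /genus.
by apply/eqP; vm_compute.
Qed.

End Final.

Theorem theorem3 (gT : finGroupType) (G : {group gT}) (s1 s2 : gT) :
  G :!=: 1 -> 'Z(G) = 1 ->
  <<[set s1; s2]>> = G -> #[s1 * s2] = 2%N -> s2 \in s1 ^: G ->
  let C := s1 ^: G in
  let e1 := cls G (s1, s1, s2, s1 * s2 * s1^-1) in
  let e2 := cls G (s1, s2 * s1 * s2^-1, s2, s2) in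
  let e3 := cls G (s1, s2, s1, s2) in
  let e4 := cls G (s1, s2, s2^-1 * s1 * s2, s1 * s2 * s1^-1) in
  let e5 := cls G (s1, s2, s2, s2^-1 * s1 * s2) in
  let e6 := cls G (s1, s2, s1 * s2 * s1^-1, s1) in
  let Z := [set e1; e2; e3; e4; e5; e6] in
  [/\ [/\ Z \subset Sigma G C, #|Z| = 6%N & orbit 'P (B4sy gT) e1 = Z],
      [/\ map (beta12 gT) [:: e1; e2; e3; e4; e5; e6] = [:: e1; e2; e4; e3; e6; e5],
          map (beta13 gT) [:: e1; e2; e3; e4; e5; e6] = [:: e2; e1; e3; e4; e6; e5]
        & map (beta14 gT) [:: e1; e2; e3; e4; e5; e6] = [:: e2; e1; e4; e3; e5; e6]],
      [/\ map (P3 gT) [:: e1; e2; e3; e4; e5; e6] = [:: e3; e4; e2; e1; e5; e6],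
          map (eta23 gT) [:: e1; e2; e3; e4; e5; e6] = [:: e4; e3; e2; e1; e6; e5]
        & map (eta234 gT) [:: e1; e2; e3; e4; e5; e6] = [:: e6; e5; e2; e1; e3; e4]],
      [/\ restr_perm Z @* B4 gT \isog [set: 'Z_2 * 'Z_2],
          {in B4 gT, forall p, ~~ odd_perm (restr_perm Z p)},
          restr_perm Z @* B4sy gT \isog [set: 'S_4]
        & restr_perm Z @* Tgrp gT \isog [set: 'S_4]]
    & genus #|Z| (ncycles Z (P3 gT)) (ncycles Z (eta23 gT)) (ncycles Z (eta234 gT)) = 0%R].
Proof.
move=> nt ZG genG o2 s2C.
have s1G : s1 \in G by rewrite -genG mem_gen // !inE eqxx.
have s2G : s2 \in G by rewrite -genG mem_gen // !inE eqxx ?orbT.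
have ncomm : s1 * s2 != s2 * s1.
  apply/negP => /eqP E; case/negP: nt; apply/eqP.
  have cG : abelian G.
    rewrite -genG abelian_gen; apply/centsP => u /set2P[]-> v /set2P[]->;
      rewrite /commute // E.
  by rewrite -ZG; apply/esym/center_idP.
have [t [tG tt1 Es2]] : exists t, [/\ t \in G, t * t = 1 & s2 = s1^-1 * t].
  exists (s1 * s2); split; first by rewrite groupM.
    by have := expg_order (s1 * s2); rewrite o2 expgS expg1.
  by rewrite mulKg.
subst s2.
have nc : s1 * t != t * s1.
  apply: contra ncomm => /eqP E; apply/eqP.
  by rewrite mulKVg -mulgA -E mulKg.
move=> C e1 e2 e3 e4 e5 e6 Z.
split.
- split.
  + by apply: ZSigma.
  + by apply: cardZ.
  + by apply: orbitZ.
- by apply: maps1.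
- by apply: maps2.
- split.
  + by apply: isoB4.
  + by apply: evenB4.
  + apply: (isoS4 (aG:=s1G) (tG:=tG) (tt1:=tt1) (nc:=nc) (genG:=genG) (ZG:=ZG)).
    by apply: imBsy.
  + apply: (isoS4 (aG:=s1G) (tG:=tG) (tt1:=tt1) (nc:=nc) (genG:=genG) (ZG:=ZG)).
    by apply: imT.
- by apply: genusZ.
Qed.
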